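(* Let two meters be coupled at times $t_1<t_2$, so that the composite state is $|\Psi\rangle=\hat T_{f,2}\,e^{-\imath g\hat A_2\otimes\hat p_2/\hbar}\,\hat T_{2,1}\,e^{-\imath g\hat A_1\otimes\hat p_1/\hbar}\,\hat T_{1,i}\,|\psi_i\rangle|\phi\rangle_1|\phi\rangle_2$, and post-select the system on $|\psi_f\rangle$, giving the two-meter state $|\Phi_f\rangle=\langle\psi_f|\Psi\rangle$. Let $\langle x_1x_2\rangle$ be the mean of $x_1x_2$ in the normalized distribution $|\langle x_1,x_2|\Phi_f\rangle|^2$ and $\langle k_1k_2\rangle$ the mean of $k_1k_2$ in the normalized distribution $|\langle k_1,k_2|\Phi_f\rangle|^2$. Then, as $g\to0$, $$\langle x_1x_2\rangle=\frac{g^2}{2}\mathrm{Re}\Big[(A_2,A_1)_w+\overline{(A_1)_w}(A_2)_w\Big]+O(g^3),$$ $$\langle k_1k_2\rangle=\frac{g^2}{8\sigma^4}\mathrm{Re}\Big[-(A_2,A_1)_w+\overline{(A_1)_w}(A_2)_w\Big]+O(g^3),$$ and consequently $$\mathrm{Re}\big[(A_2,A_1)_w\big]=\frac{1}{g^2}\Big(\langle x_1x_2\rangle-4\sigma^4\langle k_1k_2\rangle\Big)+O(g).$$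
   Context: $\mathcal H$ is a finite-dimensional system Hilbert space with self-adjoint operators $\hat A_1,\hat A_2$; times $t_i<t_1<t_2<t_f$ with unitary system evolutions $\hat T_{b,a}$ satisfying $\hat T_{c,b}\hat T_{b,a}=\hat T_{c,a}$; unit vectors $|\psi_i\rangle,|\psi_f\rangle$ with $\langle\psi_f|\hat T_{f,i}|\psi_i\rangle\neq0$. Weak values: $(A_1)_w=\langle\psi_f|\hat T_{f,1}\hat A_1\hat T_{1,i}|\psi_i\rangle/\langle\psi_f|\hat T_{f,i}|\psi_i\rangle$, $(A_2)_w=\langle\psi_f|\hat T_{f,2}\hat A_2\hat T_{2,i}|\psi_i\rangle/\langle\psi_f|\hat T_{f,i}|\psi_i\rangle$, and the sequential weak value $(A_2,A_1)_w=\langle\psi_f|\hat T_{f,2}\hat A_2\hat T_{2,1}\hat A_1\hat T_{1,i}|\psi_i\rangle/\langle\psi_f|\hat T_{f,i}|\psi_i\rangle$; $\overline{z}$ denotes complex conjugation. Each meter $r=1,2$ is a particle on $\mathbb R$ with position $\hat x_r$, momentum $\hat p_r=\hbar\hat k_r=-\imath\hbar\,\partial/\partial x_r$, initially in the real Gaussian $\phi(x)=(2\pi\sigma^2)^{-1/4}e^{-x^2/(4\sigma^2)}$ ($\sigma>0$), with wave-number representation $\tilde\phi(k)=(2\sigma^2/\pi)^{1/4}e^{-k^2\sigma^2}$; meters have no free Hamiltonian; $g>0$ is the small coupling constant. *)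

(* Defs.v *)
From Stdlib Require Import Reals Lra.
Open Scope R_scope.

Record C := mkC { Re : R ; Im : R }.
Definition C0 : C := mkC 0 0.
Definition C1 : C := mkC 1 0.
Definition RtoC (r : R) : C := mkC r 0.
Definition Cadd (z w : C) : C := mkC (Re z + Re w) (Im z + Im w).
Definition Cmul (z w : C) : C :=
  mkC (Re z * Re w - Im z * Im w) (Re z * Im w + Im z * Re w).
Definition Cconj (z : C) : C := mkC (Re z) (- Im z).
Definition Cnorm2 (z : C) : R := Re z * Re z + Im z * Im z.
Definition Cinv (z : C) : C := mkC (Re z / Cnorm2 z) (- Im z / Cnorm2 z).
Definition Cdiv (z w : C) : C := Cmul z (Cinv w).
Definition Cexpi (theta : R) : C := mkC (cos theta) (sin theta).

Fixpoint Csum (n : nat) (f : nat -> C) : C :=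
  match n with O => C0 | S m => Cadd (Csum m f) (f m) end.

(* vectors / operators: only the components with indices < n are meaningful *)
Definition Vec := nat -> C.
Definition Mat := nat -> nat -> C.

Definition inner (n : nat) (u v : Vec) : C := Csum n (fun i => Cmul (Cconj (u i)) (v i)).
Definition mv (n : nat) (M : Mat) (v : Vec) : Vec := fun i => Csum n (fun j => Cmul (M i j) (v j)).
Definition mm (n : nat) (M N : Mat) : Mat := fun i k => Csum n (fun j => Cmul (M i j) (N j k)).
Definition adj (M : Mat) : Mat := fun i j => Cconj (M j i).
Definition idm : Mat := fun i j => if Nat.eqb i j then C1 else C0.
Definition vsum (n : nat) (V : nat -> Vec) : Vec := fun i => Csum n (fun j => V j i).
Definition vscale (z : C) (v : Vec) : Vec := fun i => Cmul z (v i).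
Definition proj (u : Vec) : Mat := fun i j => Cmul (u i) (Cconj (u j)).

Definition unit_vec (n : nat) (v : Vec) : Prop := inner n v v = C1.
Definition self_adjoint (n : nat) (A : Mat) : Prop :=
  forall i j, (i < n)%nat -> (j < n)%nat -> A i j = Cconj (A j i).
Definition unitary (n : nat) (U : Mat) : Prop :=
  forall i j, (i < n)%nat -> (j < n)%nat ->
    mm n (adj U) U i j = idm i j /\ mm n U (adj U) i j = idm i j.

Definition spectral_decomp (n : nat) (A : Mat) (u : nat -> Vec) (a : nat -> R) : Prop :=
  (forall j k, (j < n)%nat -> (k < n)%nat -> inner n (u j) (u k) = idm j k) /\
  (forall i k, (i < n)%nat -> (k < n)%nat ->
     A i k = Csum n (fun j => Cmul (RtoC (a j)) (proj (u j) i k))).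

(* T_{f,i} = T_{f,2} T_{2,1} T_{1,i}, T_{f,1} = T_{f,2} T_{2,1}, T_{2,i} = T_{2,1} T_{1,i} *)
Definition amp0 n (T1i T21 Tf2 : Mat) (pi pf : Vec) : C :=
  inner n pf (mv n Tf2 (mv n T21 (mv n T1i pi))).
Definition weak1 n (A1 T1i T21 Tf2 : Mat) (pi pf : Vec) : C :=
  Cdiv (inner n pf (mv n Tf2 (mv n T21 (mv n A1 (mv n T1i pi)))))
       (amp0 n T1i T21 Tf2 pi pf).
Definition weak2 n (A2 T1i T21 Tf2 : Mat) (pi pf : Vec) : C :=
  Cdiv (inner n pf (mv n Tf2 (mv n A2 (mv n T21 (mv n T1i pi)))))
       (amp0 n T1i T21 Tf2 pi pf).
Definition weak21 n (A1 A2 T1i T21 Tf2 : Mat) (pi pf : Vec) : C :=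
  Cdiv (inner n pf (mv n Tf2 (mv n A2 (mv n T21 (mv n A1 (mv n T1i pi))))))
       (amp0 n T1i T21 Tf2 pi pf).

Definition phi (sigma x : R) : R :=
  Rpower (2 * PI * sigma ^ 2) (- / 4) * exp (- x ^ 2 / (4 * sigma ^ 2)).
Definition phit (sigma k : R) : R :=
  Rpower (2 * sigma ^ 2 / PI) (/ 4) * exp (- k ^ 2 * sigma ^ 2).

(* composite (system + two meters) states, H-valued functions of the two
   meter coordinates (positions x1 x2, or wave numbers k1 k2) *)
Definition St := R -> R -> Vec.

Definition init (f : R -> R) (psi : Vec) : St :=
  fun y1 y2 => vscale (RtoC (f y1 * f y2)) psi.
Definition applyT n (T : Mat) (Psi : St) : St := fun y1 y2 => mv n T (Psi y1 y2).

(* exp(-i g A (x) p_r / hbar) via the spectral decomposition of A: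
   sum_j |u_j><u_j| (x) exp(-i g a_j p_r / hbar), where exp(-i g a p/hbar)
   translates the position wavefunction by g a, and multiplies the
   wave-number wavefunction by exp(-i g a k). *)
Definition coupleX1 n (u : nat -> Vec) (a : nat -> R) (g : R) (Psi : St) : St :=
  fun x1 x2 => vsum n (fun j => mv n (proj (u j)) (Psi (x1 - g * a j) x2)).
Definition coupleX2 n (u : nat -> Vec) (a : nat -> R) (g : R) (Psi : St) : St :=
  fun x1 x2 => vsum n (fun j => mv n (proj (u j)) (Psi x1 (x2 - g * a j))).
Definition coupleK1 n (u : nat -> Vec) (a : nat -> R) (g : R) (Psi : St) : St :=
  fun k1 k2 => vsum n (fun j => vscale (Cexpi (- g * a j * k1)) (mv n (proj (u j)) (Psi k1 k2))).
Definition coupleK2 n (u : nat -> Vec) (a : nat -> R) (g : R) (Psi : St) : St :=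
  fun k1 k2 => vsum n (fun j => vscale (Cexpi (- g * a j * k2)) (mv n (proj (u j)) (Psi k1 k2))).

(* |Psi> = T_{f,2} e^{-igA2 p2} T_{2,1} e^{-igA1 p1} T_{1,i} |psi_i>|phi>|phi>,
   position representation, and |Phi_f>(x1,x2) = <psi_f|Psi(x1,x2)> *)
Definition PsiX n T1i T21 Tf2 (u1 u2 : nat -> Vec) (a1 a2 : nat -> R) sigma g (pi : Vec) : St :=
  applyT n Tf2 (coupleX2 n u2 a2 g (applyT n T21 (coupleX1 n u1 a1 g
     (applyT n T1i (init (phi sigma) pi))))).
Definition PsiK n T1i T21 Tf2 (u1 u2 : nat -> Vec) (a1 a2 : nat -> R) sigma g (pi : Vec) : St :=
  applyT n Tf2 (coupleK2 n u2 a2 g (applyT n T21 (coupleK1 n u1 a1 g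
     (applyT n T1i (init (phit sigma) pi))))).
Definition postsel n (pf : Vec) (Psi : St) : R -> R -> C := fun y1 y2 => inner n pf (Psi y1 y2).

Definition is_int_R (f : R -> R) (I : R) : Prop :=
  forall eps, 0 < eps -> exists M, forall a b, M <= a -> M <= b ->
    exists pr : Riemann_integrable f (- a) b, Rabs (RiemannInt pr - I) < eps.
(* integral over R^2 (iterated: inner variable y2, outer y1) *)
Definition is_int_R2 (F : R -> R -> R) (I : R) : Prop :=
  exists G : R -> R, (forall y1, is_int_R (fun y2 => F y1 y2) (G y1)) /\ is_int_R G I.

Definition mean2 (P h : R -> R -> R) (m : R) : Prop :=
  exists N M, is_int_R2 P N /\ N <> 0 /\
    is_int_R2 (fun y1 y2 => h y1 y2 * P y1 y2) M /\ m = M / N.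

(* Main.v *)
From Pilot Require Import Defs.
From Stdlib Require Import Reals.
Open Scope R_scope.

From Stdlib Require Import Lra Lia FunctionalExtensionality ClassicalEpsilon.
From mathcomp Require all_boot all_algebra Rstruct.
From mathcomp.real_closed Require complex.
From Coquelicot Require Import Rcomplements Rbar Hierarchy Continuity Derive RInt Lim_seq AutoDerive RInt_analysis.
Import Pilot.Defs.
Open Scope R_scope.

Module LA.
Import all_boot all_algebra Rstruct complex.
Import GRing.Theory.
Local Open Scope ring_scope.
Local Open Scope complex_scope.

Definition toc (z : Defs.C) : Rdefinitions.R[i] := Complex (Defs.Re z) (Defs.Im z).

Lemma toc_add z w : toc (Cadd z w) = toc z + toc w.
Proof. by case: z => a b; case: w => c d. Qed.
Lemma toc_mul z w : toc (Cmul z w) = toc z * toc w.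
Proof. by case: z => a b; case: w => c d. Qed.
Lemma toc_C0 : toc Defs.C0 = 0. Proof. by []. Qed.
Lemma toc_C1 : toc Defs.C1 = 1. Proof. by []. Qed.
Lemma toc_inj z w : toc z = toc w -> z = w.
Proof. case: z => a b; case: w => c d /= [-> ->]. by []. Qed.
Lemma toc_sum n f : toc (Csum n f) = \sum_(j < n) toc (f j).
Proof.
elim: n => [|n IH]; first by rewrite big_ord0.
by rewrite big_ord_recr /= toc_add IH.
Qed.
Lemma toc_idm i j : toc (idm i j) = (i == j)%:R.
Proof. rewrite /idm. case: (PeanoNat.Nat.eqb_spec i j) => [->|h]; first by rewrite eqxx.
by case: eqP. Qed.

Lemma complete n (u : nat -> Vec) :
  (forall j k, (j < n)%coq_nat -> (k < n)%coq_nat -> inner n (u j) (u k) = idm j k) ->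
  forall i l, (i < n)%coq_nat -> (l < n)%coq_nat ->
    Csum n (fun j => Cmul (u j i) (Cconj (u j l))) = idm i l.
Proof.
move=> H i l hi hl.
pose U : 'M[Rdefinitions.R[i]]_n := \matrix_(a < n, b < n) toc (u b a).
pose V : 'M[Rdefinitions.R[i]]_n := \matrix_(a < n, b < n) toc (Cconj (u a b)).
have VU : V *m U = 1%:M.
  apply/matrixP => j k; rewrite !mxE.
  have := H j k (ltP (ltn_ord j)) (ltP (ltn_ord k)).
  move/(congr1 toc); rewrite toc_idm /inner toc_sum => <-.
  apply: eq_bigr => a _; by rewrite !mxE toc_mul.
have UV := mulmx1C VU.
have := congr1 (fun M : 'M_n => M (Ordinal (introT ltP hi)) (Ordinal (introT ltP hl))) UV.
rewrite /= !mxE /= => E. apply: toc_inj. rewrite toc_idm toc_sum -E.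
apply: eq_bigr => a _; by rewrite !mxE toc_mul.
Qed.
End LA.


Lemma C_ext (z w : Defs.C) : Re z = Re w -> Im z = Im w -> z = w.
Proof. destruct z, w; simpl; intros; subst; reflexivity. Qed.
Ltac Csimpl := unfold Cadd, Cmul, Cconj, RtoC, C0, Defs.C1, Cnorm2, Cinv, Cdiv, Cexpi; cbn [Re Im].
Ltac Cring := apply C_ext; Csimpl; ring.

Fixpoint rsum (n : nat) (f : nat -> R) : R :=
  match n with O => 0 | S m => rsum m f + f m end.

Lemma Csum_ext n f g : (forall j, (j < n)%nat -> f j = g j) -> Csum n f = Csum n g.
Proof. induction n; simpl; intros H; auto. rewrite IHn by (intros; apply H; lia). rewrite H by lia; auto. Qed.
Lemma rsum_ext n f g : (forall j, (j < n)%nat -> f j = g j) -> rsum n f = rsum n g.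
Proof. induction n; simpl; intros H; auto. rewrite IHn by (intros; apply H; lia). rewrite H by lia; auto. Qed.
Lemma Re_Csum n f : Re (Csum n f) = rsum n (fun j => Re (f j)).
Proof. induction n; simpl; auto. rewrite IHn; auto. Qed.
Lemma Im_Csum n f : Im (Csum n f) = rsum n (fun j => Im (f j)).
Proof. induction n; simpl; auto. rewrite IHn; auto. Qed.
Lemma Csum_mul_l n z f : Cmul z (Csum n f) = Csum n (fun j => Cmul z (f j)).
Proof. induction n; simpl. Cring. rewrite <- IHn. Cring. Qed.
Lemma Csum_swap n m (f : nat -> nat -> Defs.C) :
  Csum n (fun j => Csum m (fun k => f j k)) = Csum m (fun k => Csum n (fun j => f j k)).
Proof.
  induction n; simpl.
  - induction m; simpl; auto. rewrite <- IHm. Cring.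
  - rewrite IHn. clear IHn. induction m; simpl. Cring. rewrite <- IHm. Cring.
Qed.
Lemma rsum_add n f g : rsum n (fun j => f j + g j) = rsum n f + rsum n g.
Proof. induction n; simpl. ring. rewrite IHn; ring. Qed.
Lemma rsum_scal n c f : rsum n (fun j => c * f j) = c * rsum n f.
Proof. induction n; simpl. ring. rewrite IHn; ring. Qed.
Lemma rsum_mult n m f g : rsum n f * rsum m g = rsum n (fun j => rsum m (fun k => f j * g k)).
Proof.
  induction n; simpl. ring. rewrite <- IHn.
  rewrite Rmult_plus_distr_r. f_equal. rewrite <- rsum_scal.
  apply rsum_ext; intros; ring.
Qed.
Lemma rsum_le n f g : (forall j, (j < n)%nat -> f j <= g j) -> rsum n f <= rsum n g.
Proof. induction n; simpl; intros H. lra. apply Rplus_le_compat. apply IHn; intros; apply H; lia. apply H; lia. Qed.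
Lemma rsum_approx n (h v L : nat -> R) c :
  (forall j, (j < n)%nat -> Rabs (h j - v j) <= c * L j) ->
  Rabs (rsum n h - rsum n v) <= c * rsum n L.
Proof.
  induction n; simpl; intros H. rewrite Rminus_0_r, Rabs_R0; lra.
  replace (rsum n h + h n - (rsum n v + v n)) with ((rsum n h - rsum n v) + (h n - v n)) by ring.
  eapply Rle_trans. apply Rabs_triang. rewrite Rmult_plus_distr_l.
  apply Rplus_le_compat. apply IHn; intros; apply H; lia. apply H; lia.
Qed.

Lemma mv_vscale n M z v : mv n M (vscale z v) = vscale z (mv n M v).
Proof.
  apply functional_extensionality; intro i. unfold mv, vscale.
  rewrite Csum_mul_l. apply Csum_ext; intros. Cring.
Qed.
Lemma mv_vsum n m M V : mv n M (vsum m V) = vsum m (fun j => mv n M (V j)).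
Proof.
  apply functional_extensionality; intro i. unfold mv, vsum.
  rewrite Csum_swap. apply Csum_ext; intros. rewrite Csum_mul_l. reflexivity.
Qed.
Lemma inner_vscale n u z v : inner n u (vscale z v) = Cmul z (inner n u v).
Proof. unfold inner, vscale. rewrite Csum_mul_l. apply Csum_ext; intros. Cring. Qed.
Lemma inner_vsum n m u V : inner n u (vsum m V) = Csum m (fun j => inner n u (V j)).
Proof. unfold inner, vsum. rewrite Csum_swap. apply Csum_ext; intros. rewrite Csum_mul_l. reflexivity. Qed.
Lemma mv_ext n M v w : (forall i, (i < n)%nat -> v i = w i) -> mv n M v = mv n M w.
Proof. intros H. apply functional_extensionality; intro i. unfold mv. apply Csum_ext; intros. rewrite H; auto. Qed.
Lemma inner_ext n u v w : (forall i, (i < n)%nat -> v i = w i) -> inner n u v = inner n u w.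
Proof. intros H. unfold inner. apply Csum_ext; intros. rewrite H; auto. Qed.
Lemma vsum_ext m V W : (forall j, V j = W j) -> vsum m V = vsum m W.
Proof. intros H. f_equal. apply functional_extensionality; auto. Qed.
Lemma Csum_ext' n f g : (forall j, f j = g j) -> Csum n f = Csum n g.
Proof. intros H. apply Csum_ext; auto. Qed.

Definition cc n (T1i T21 Tf2 : Mat) (u1 u2 : nat -> Vec) (pi pf : Vec) j k :=
  inner n pf (mv n Tf2 (mv n (proj (u2 k)) (mv n T21 (mv n (proj (u1 j)) (mv n T1i pi))))).

Lemma PhiX_eq n T1i T21 Tf2 u1 u2 a1 a2 sigma g pi pf x1 x2 :
  postsel n pf (PsiX n T1i T21 Tf2 u1 u2 a1 a2 sigma g pi) x1 x2 =
  Csum n (fun k => Csum n (fun j => Cmul (RtoC (phi sigma (x1 - g * a1 j) * phi sigma (x2 - g * a2 k)))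
     (cc n T1i T21 Tf2 u1 u2 pi pf j k))).
Proof.
  unfold postsel, PsiX, applyT, coupleX2, coupleX1, init.
  rewrite mv_vsum, inner_vsum. apply Csum_ext'; intro k.
  rewrite !mv_vsum, inner_vsum. apply Csum_ext'; intro j.
  rewrite !mv_vscale, inner_vscale. reflexivity.
Qed.

Lemma PhiK_eq n T1i T21 Tf2 u1 u2 a1 a2 sigma g pi pf k1 k2 :
  postsel n pf (PsiK n T1i T21 Tf2 u1 u2 a1 a2 sigma g pi) k1 k2 =
  Csum n (fun k => Csum n (fun j => Cmul (Cmul (Cexpi (- g * a2 k * k2))
        (Cmul (Cexpi (- g * a1 j * k1)) (RtoC (phit sigma k1 * phit sigma k2))))
     (cc n T1i T21 Tf2 u1 u2 pi pf j k))).
Proof.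
  unfold postsel, PsiK, applyT, coupleK2, coupleK1, init.
  rewrite mv_vsum, inner_vsum. apply Csum_ext'; intro k.
  rewrite !mv_vscale, inner_vscale.
  rewrite !mv_vsum, inner_vsum. rewrite Csum_mul_l. apply Csum_ext'; intro j.
  rewrite !mv_vscale, !inner_vscale. unfold cc. Cring.
Qed.

Lemma Cmul_comm_sum n f z : Cmul (Csum n f) z = Csum n (fun j => Cmul (f j) z).
Proof. induction n; simpl. Cring. rewrite <- IHn. Cring. Qed.

Lemma Csum_zero n : Csum n (fun _ => C0) = C0.
Proof. induction n; simpl; auto. rewrite IHn. Cring. Qed.

Lemma Csum_idm n i (v : Vec) : (i < n)%nat -> Csum n (fun l => Cmul (idm i l) (v l)) = v i.
Proof.
  induction n; intros H. lia. simpl.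
  destruct (Nat.eq_dec i n) as [->|ne].
  - rewrite Csum_ext with (g := fun _ => C0).
    + unfold idm; rewrite Nat.eqb_refl. rewrite Csum_zero. Cring.
    + intros l hl. unfold idm. replace (Nat.eqb n l) with false. Cring. symmetry; apply Nat.eqb_neq; lia.
  - rewrite IHn by lia. unfold idm. replace (Nat.eqb i n) with false. Cring. symmetry; apply Nat.eqb_neq; lia.
Qed.

Lemma complete_v n A u a : spectral_decomp n A u a ->
  forall v i, (i < n)%nat -> vsum n (fun j => mv n (proj (u j)) v) i = v i.
Proof.
  intros [Horth _] v i hi. unfold vsum, mv, proj.
  transitivity (Csum n (fun l => Cmul (Csum n (fun j => Cmul (u j i) (Cconj (u j l)))) (v l))).
  - rewrite Csum_swap. apply Csum_ext; intros l hl.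
    rewrite Cmul_comm_sum. reflexivity.
  - rewrite <- (Csum_idm n i v hi). apply Csum_ext; intros l hl.
    rewrite (LA.complete n u Horth i l hi hl). reflexivity.
Qed.

Lemma spectral_v n A u a : spectral_decomp n A u a ->
  forall v i, (i < n)%nat ->
  mv n A v i = vsum n (fun j => vscale (RtoC (a j)) (mv n (proj (u j)) v)) i.
Proof.
  intros [_ HA] v i hi. unfold vsum, mv, vscale.
  transitivity (Csum n (fun l => Cmul (Csum n (fun j => Cmul (RtoC (a j)) (proj (u j) i l))) (v l))).
  - apply Csum_ext; intros l hl. rewrite HA by auto. reflexivity.
  - transitivity (Csum n (fun l => Csum n (fun j => Cmul (Cmul (RtoC (a j)) (proj (u j) i l)) (v l)))).
    + apply Csum_ext; intros l hl. apply Cmul_comm_sum.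
    + rewrite Csum_swap. apply Csum_ext; intros j hj.
      rewrite Csum_mul_l. apply Csum_ext; intros l hl. Cring.
Qed.

Lemma expand_gen n T1i T21 Tf2 u1 u2 pi pf (X1 X2 : Vec -> Vec) (al be : nat -> R) :
  (forall v i, (i < n)%nat -> X1 v i = vsum n (fun j => vscale (RtoC (al j)) (mv n (proj (u1 j)) v)) i) ->
  (forall v i, (i < n)%nat -> X2 v i = vsum n (fun k => vscale (RtoC (be k)) (mv n (proj (u2 k)) v)) i) ->
  inner n pf (mv n Tf2 (X2 (mv n T21 (X1 (mv n T1i pi))))) =
  Csum n (fun k => Csum n (fun j => Cmul (RtoC (be k * al j)) (cc n T1i T21 Tf2 u1 u2 pi pf j k))).
Proof.
  intros H1 H2.
  rewrite (mv_ext n Tf2 _ _ (H2 _)). rewrite (mv_ext n T21 _ _ (H1 _)).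
  rewrite mv_vsum, inner_vsum. apply Csum_ext'; intro k.
  rewrite !mv_vscale, inner_vscale, !mv_vsum, inner_vsum, Csum_mul_l.
  apply Csum_ext'; intro j.
  rewrite !mv_vscale, !inner_vscale. unfold cc. Cring.
Qed.

Lemma id_expand n A u a : spectral_decomp n A u a ->
  forall v i, (i < n)%nat -> (fun w : Vec => w) v i = vsum n (fun j => vscale (RtoC 1) (mv n (proj (u j)) v)) i.
Proof.
  intros H v i hi. cbv beta. rewrite <- (complete_v n A u a H v i hi). unfold vsum. apply Csum_ext; intros.
  unfold vscale. Cring.
Qed.

Section Amps.
Variables (n : nat) (A1 A2 T1i T21 Tf2 : Mat) (pi pf : Vec) (u1 u2 : nat -> Vec) (a1 a2 : nat -> R).
Hypothesis S1 : spectral_decomp n A1 u1 a1.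
Hypothesis S2 : spectral_decomp n A2 u2 a2.
Local Notation c := (cc n T1i T21 Tf2 u1 u2 pi pf).

Lemma amp0_eq : amp0 n T1i T21 Tf2 pi pf = Csum n (fun k => Csum n (fun j => c j k)).
Proof.
  unfold amp0.
  rewrite (expand_gen n T1i T21 Tf2 u1 u2 pi pf (fun w => w) (fun w => w) (fun _ => 1) (fun _ => 1)
    (id_expand n A1 u1 a1 S1) (id_expand n A2 u2 a2 S2)).
  apply Csum_ext'; intro k; apply Csum_ext'; intro j. Cring.
Qed.
Lemma amp1_eq : inner n pf (mv n Tf2 (mv n T21 (mv n A1 (mv n T1i pi)))) =
   Csum n (fun k => Csum n (fun j => Cmul (RtoC (a1 j)) (c j k))).
Proof.
  rewrite (expand_gen n T1i T21 Tf2 u1 u2 pi pf (mv n A1) (fun w => w) a1 (fun _ => 1)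
    (spectral_v n A1 u1 a1 S1) (id_expand n A2 u2 a2 S2)).
  apply Csum_ext'; intro k; apply Csum_ext'; intro j. Cring.
Qed.
Lemma amp2_eq : inner n pf (mv n Tf2 (mv n A2 (mv n T21 (mv n T1i pi)))) =
   Csum n (fun k => Csum n (fun j => Cmul (RtoC (a2 k)) (c j k))).
Proof.
  rewrite (expand_gen n T1i T21 Tf2 u1 u2 pi pf (fun w => w) (mv n A2) (fun _ => 1) a2
    (id_expand n A1 u1 a1 S1) (spectral_v n A2 u2 a2 S2)).
  apply Csum_ext'; intro k; apply Csum_ext'; intro j. Cring.
Qed.
Lemma amp21_eq : inner n pf (mv n Tf2 (mv n A2 (mv n T21 (mv n A1 (mv n T1i pi))))) =
   Csum n (fun k => Csum n (fun j => Cmul (RtoC (a2 k * a1 j)) (c j k))).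
Proof.
  rewrite (expand_gen n T1i T21 Tf2 u1 u2 pi pf (mv n A1) (mv n A2) a1 a2
    (spectral_v n A1 u1 a1 S1) (spectral_v n A2 u2 a2 S2)).
  reflexivity.
Qed.
End Amps.

Definition rs4 n (F : nat -> nat -> nat -> nat -> R) : R :=
  rsum n (fun k => rsum n (fun k' => rsum n (fun j => rsum n (fun j' => F k k' j j')))).

Lemma rs4_ext n F G : (forall k k' j j', (k < n)%nat -> (k' < n)%nat -> (j < n)%nat -> (j' < n)%nat ->
  F k k' j j' = G k k' j j') -> rs4 n F = rs4 n G.
Proof.
  intros H. unfold rs4. apply rsum_ext; intros. apply rsum_ext; intros.
  apply rsum_ext; intros. apply rsum_ext; intros. auto.
Qed.
Lemma rs4_add n F G : rs4 n (fun k k' j j' => F k k' j j' + G k k' j j') = rs4 n F + rs4 n G.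
Proof.
  unfold rs4. rewrite <- rsum_add. apply rsum_ext; intros. rewrite <- rsum_add. apply rsum_ext; intros.
  rewrite <- rsum_add. apply rsum_ext; intros. rewrite <- rsum_add. reflexivity.
Qed.
Lemma rs4_scal n c F : rs4 n (fun k k' j j' => c * F k k' j j') = c * rs4 n F.
Proof.
  unfold rs4. rewrite <- rsum_scal. apply rsum_ext; intros. rewrite <- rsum_scal. apply rsum_ext; intros.
  rewrite <- rsum_scal. apply rsum_ext; intros. rewrite <- rsum_scal. reflexivity.
Qed.
Lemma rs4_approx n h v L c : (forall k k' j j', (k < n)%nat -> (k' < n)%nat -> (j < n)%nat -> (j' < n)%nat ->
  Rabs (h k k' j j' - v k k' j j') <= c * L k k' j j') -> Rabs (rs4 n h - rs4 n v) <= c * rs4 n L.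
Proof.
  intros H. unfold rs4. apply rsum_approx; intros. apply rsum_approx; intros.
  apply rsum_approx; intros. apply rsum_approx; intros. auto.
Qed.
Lemma rs4_mult n f h :
  rsum n (fun k => rsum n (fun j => f j k)) * rsum n (fun k' => rsum n (fun j' => h j' k')) =
  rs4 n (fun k k' j j' => f j k * h j' k').
Proof.
  unfold rs4. rewrite rsum_mult. apply rsum_ext; intros. apply rsum_ext; intros.
  apply rsum_mult.
Qed.
Lemma ip_double n (X Y : nat -> nat -> Defs.C) :
  rs4 n (fun k k' j j' => Re (X j k) * Re (Y j' k') + Im (X j k) * Im (Y j' k')) =
  Re (Csum n (fun k => Csum n (fun j => X j k))) * Re (Csum n (fun k => Csum n (fun j => Y j k))) +
  Im (Csum n (fun k => Csum n (fun j => X j k))) * Im (Csum n (fun k => Csum n (fun j => Y j k))).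
Proof.
  rewrite rs4_add. rewrite !Re_Csum, !Im_Csum.
  rewrite (rsum_ext n (fun j => Re (Csum n (fun j0 => X j0 j))) (fun j => rsum n (fun j0 => Re (X j0 j))))
    by (intros; apply Re_Csum).
  rewrite (rsum_ext n (fun j => Re (Csum n (fun j0 => Y j0 j))) (fun j => rsum n (fun j0 => Re (Y j0 j))))
    by (intros; apply Re_Csum).
  rewrite (rsum_ext n (fun j => Im (Csum n (fun j0 => X j0 j))) (fun j => rsum n (fun j0 => Im (X j0 j))))
    by (intros; apply Im_Csum).
  rewrite (rsum_ext n (fun j => Im (Csum n (fun j0 => Y j0 j))) (fun j => rsum n (fun j0 => Im (Y j0 j))))
    by (intros; apply Im_Csum).
  rewrite !rs4_mult. reflexivity.
Qed.
Lemma Cnorm2_double n (X : nat -> nat -> Defs.C) :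
  Cnorm2 (Csum n (fun k => Csum n (fun j => X j k))) =
  rs4 n (fun k k' j j' => Re (X j k) * Re (X j' k') + Im (X j k) * Im (X j' k')).
Proof. rewrite ip_double. reflexivity. Qed.

Definition cont (f : R -> R) := forall x, continuous f x.
Definition iR (f : R -> R) (I : R) := forall eps, 0 < eps -> exists M, forall a b, M <= a -> M <= b ->
  Rabs (RInt f (-a) b - I) < eps.
Definition iRc f I := cont f /\ iR f I.

Lemma exRI f a b : cont f -> ex_RInt f a b.
Proof. intros H. apply (@ex_RInt_continuous R_CompleteNormedModule). intros; apply H. Qed.

Lemma cont_plus f g : cont f -> cont g -> cont (fun x => f x + g x).
Proof. intros Hf Hg x. apply (continuous_plus f g x); auto. Qed.
Lemma cont_mult f g : cont f -> cont g -> cont (fun x => f x * g x).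
Proof. intros Hf Hg x. apply (continuous_mult f g x); auto. Qed.
Lemma cont_const c : cont (fun _ => c).
Proof. intros x. apply continuous_const. Qed.
Lemma cont_scal c f : cont f -> cont (fun x => c * f x).
Proof. intros H. apply cont_mult; auto. apply cont_const. Qed.
Lemma cont_ext f g : (forall x, f x = g x) -> cont f -> cont g.
Proof. intros E H x. apply (continuous_ext f g x E (H x)). Qed.
Lemma cont_deriv f : (forall x, ex_derive f x) -> cont f.
Proof. intros H x. apply (@ex_derive_continuous R_AbsRing R_NormedModule). auto. Qed.

Lemma RInt_plus' f g a b : cont f -> cont g ->
  RInt (fun x => f x + g x) a b = RInt f a b + RInt g a b.
Proof. intros Hf Hg. apply (RInt_plus f g a b); apply exRI; auto. Qed.
Lemma RInt_scal' f c a b : cont f -> RInt (fun x => c * f x) a b = c * RInt f a b.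
Proof. intros Hf. apply (RInt_scal f a b c); apply exRI; auto. Qed.

Lemma iR_ext f g I : (forall x, f x = g x) -> iR f I -> iR g I.
Proof. intros E. replace g with f; auto. apply functional_extensionality; auto. Qed.
Lemma iRc_ext f g I : (forall x, f x = g x) -> iRc f I -> iRc g I.
Proof. intros E [H1 H2]. split. eapply cont_ext; eauto. eapply iR_ext; eauto. Qed.

Lemma iRc_plus f g I J : iRc f I -> iRc g J -> iRc (fun x => f x + g x) (I + J).
Proof.
  intros [Hf If] [Hg Ig]. split. apply cont_plus; auto.
  intros eps He. destruct (If (eps/2)) as [M1 HM1]. lra. destruct (Ig (eps/2)) as [M2 HM2]. lra.
  exists (Rmax M1 M2). intros a b Ha Hb. rewrite RInt_plus' by auto.
  specialize (HM1 a b ltac:(eapply Rle_trans; [apply Rmax_l|eauto]) ltac:(eapply Rle_trans; [apply Rmax_l|eauto])).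
  specialize (HM2 a b ltac:(eapply Rle_trans; [apply Rmax_r|eauto]) ltac:(eapply Rle_trans; [apply Rmax_r|eauto])).
  replace (RInt f (- a) b + RInt g (- a) b - (I + J)) with ((RInt f (- a) b - I) + (RInt g (- a) b - J)) by ring.
  eapply Rle_lt_trans. apply Rabs_triang. lra.
Qed.
Lemma iRc_scal c f I : iRc f I -> iRc (fun x => c * f x) (c * I).
Proof.
  intros [Hf If]. split. apply cont_scal; auto.
  intros eps He. destruct (If (eps / (Rabs c + 1))) as [M HM].
  apply Rdiv_lt_0_compat; auto. pose proof (Rabs_pos c); lra.
  exists M. intros a b Ha Hb. rewrite RInt_scal' by auto.
  specialize (HM a b Ha Hb).
  replace (c * RInt f (- a) b - c * I) with (c * (RInt f (- a) b - I)) by ring.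
  rewrite Rabs_mult. pose proof (Rabs_pos c).
  apply Rle_lt_trans with ((Rabs c + 1) * Rabs (RInt f (- a) b - I)).
  apply Rmult_le_compat_r. apply Rabs_pos. lra.
  apply Rlt_le_trans with ((Rabs c + 1) * (eps / (Rabs c + 1))).
  apply Rmult_lt_compat_l; lra. right; field; lra.
Qed.
Lemma iRc_zero : iRc (fun _ => 0) 0.
Proof.
  split. apply cont_const. intros eps He. exists 0. intros a b _ _.
  rewrite RInt_const. unfold scal; simpl. unfold mult; simpl. rewrite Rmult_0_r, Rminus_0_r, Rabs_R0; auto.
Qed.




Lemma iRc_rsum n (F : nat -> R -> R) (I : nat -> R) :
  (forall t, (t < n)%nat -> iRc (F t) (I t)) -> iRc (fun x => rsum n (fun t => F t x)) (rsum n I).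
Proof.
  induction n; intros H; simpl. apply iRc_zero.
  apply (iRc_plus (fun x => rsum n (fun t => F t x)) (F n)). apply IHn; intros; apply H; lia. apply H; lia.
Qed.

Lemma iR_unique f I J : iR f I -> iR f J -> I = J.
Proof.
  intros HI HJ. apply Rminus_diag_uniq. apply Rabs_eq_0.
  apply Rle_antisym; [|apply Rabs_pos].
  apply Rnot_lt_le; intros Hp.
  destruct (HI (Rabs (I - J) / 2)) as [M1 H1]. lra. destruct (HJ (Rabs (I - J) / 2)) as [M2 H2]. lra.
  set (M := Rmax M1 M2).
  specialize (H1 M M (Rmax_l _ _) (Rmax_l _ _)). specialize (H2 M M (Rmax_r _ _) (Rmax_r _ _)).
  pose proof (Rabs_triang (- (RInt f (- M) M - I)) (RInt f (- M) M - J)) as T. rewrite Rabs_Ropp in T.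
  replace (- (RInt f (- M) M - I) + (RInt f (- M) M - J)) with (I - J) in T by ring. lra.
Qed.

Lemma iR_le f h I H : cont f -> cont h -> iR f I -> iR h H -> (forall x, f x <= h x) -> I <= H.
Proof.
  intros cf ch HI HH Hle. apply Rnot_lt_le; intros Hp.
  destruct (HI ((I - H) / 2)) as [M1 H1]. lra. destruct (HH ((I - H) / 2)) as [M2 H2]. lra.
  set (M := Rmax 0 (Rmax M1 M2)).
  assert (M1 <= M) by (unfold M; eapply Rle_trans; [apply Rmax_l|apply Rmax_r]).
  assert (M2 <= M) by (unfold M; eapply Rle_trans; [apply Rmax_r|apply Rmax_r]).
  assert (0 <= M) by apply Rmax_l.
  specialize (H1 M M H0 H0). specialize (H2 M M H3 H3).
  assert (RInt f (-M) M <= RInt h (-M) M).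
  { apply RInt_le. lra. apply exRI; auto. apply exRI; auto. intros; auto. }
  apply Rabs_def2 in H1. apply Rabs_def2 in H2. lra.
Qed.

Lemma abs_le_inv x y : Rabs x <= y -> - y <= x <= y.
Proof. unfold Rabs; destruct (Rcase_abs x); lra. Qed.

Lemma iR_abs_le f h I H : cont f -> cont h -> iR f I -> iR h H -> (forall x, Rabs (f x) <= h x) -> Rabs I <= H.
Proof.
  intros cf ch HI HH Hle. apply Rabs_le. split.
  - assert (iR (fun x => - h x) (- H)).
    { destruct (iRc_scal (-1) h H (conj ch HH)) as [_ X]. eapply iR_ext. 2: { replace (-H) with (-1 * H) by ring. exact X. }
      intros; simpl; ring. }
    apply (iR_le (fun x => - h x) f). eapply cont_ext. 2: apply (cont_scal (-1) h ch). intros; simpl; ring.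
    auto. auto. auto. intros x. specialize (Hle x). apply abs_le_inv in Hle. lra.
  - apply (iR_le f h); auto. intros x. specialize (Hle x). apply abs_le_inv in Hle. lra.
Qed.

Lemma RInt_odd f a : cont f -> (forall x, f (- x) = - f x) -> RInt f (- a) a = 0.
Proof.
  intros cf Hodd.
  assert (E : RInt (fun y => scal (-1) (f (-1 * y + 0))) (- a) a = RInt f (-1 * - a + 0) (-1 * a + 0)).
  { apply (RInt_comp_lin (V:=R_CompleteNormedModule)). apply exRI; auto. }
  replace (-1 * - a + 0) with a in E by ring. replace (-1 * a + 0) with (- a) in E by ring.
  rewrite <- (opp_RInt_swap (V:=R_CompleteNormedModule) f (- a) a) in E. 2: apply exRI; auto.
  assert (E2 : RInt (fun y => scal (-1) (f (-1 * y + 0))) (- a) a = RInt f (- a) a).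
  { apply RInt_ext. intros x _. unfold scal; simpl; unfold mult; simpl.
    replace (-1 * x + 0) with (- x) by ring. rewrite Hodd. ring. }
  rewrite E2 in E. unfold opp in E; simpl in E.
  change (RInt f (- a) a = - RInt f (- a) a) in E. lra.
Qed.

Lemma iR_odd f I : cont f -> (forall x, f (- x) = - f x) -> iR f I -> I = 0.
Proof.
  intros cf Hodd HI. apply Rabs_eq_0. apply Rle_antisym; [|apply Rabs_pos].
  apply Rnot_lt_le; intros Hp. destruct (HI (Rabs I)) as [M HM]; auto.
  specialize (HM M M (Rle_refl _) (Rle_refl _)). rewrite RInt_odd in HM by auto.
  rewrite Rminus_0_l, Rabs_Ropp in HM. lra.
Qed.

Lemma iRc_trans f I m : iRc f I -> iRc (fun x => f (x - m)) I.
Proof.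
  intros [cf HI]. split.
  - intros x. apply (continuous_comp (fun x => x - m) f). apply (continuous_plus (fun x => x) (fun _ => - m)).
    apply continuous_id. apply continuous_const. apply cf.
  - intros eps He. destruct (HI eps He) as [M HM]. exists (M + Rabs m). intros a b Ha Hb.
    assert (E : RInt (fun y => scal 1 (f (1 * y + - m))) (- a) b = RInt f (1 * - a + - m) (1 * b + - m)).
    { apply (RInt_comp_lin (V:=R_CompleteNormedModule)). apply exRI; auto. }
    assert (E2 : RInt (fun y => scal 1 (f (1 * y + - m))) (- a) b = RInt (fun x => f (x - m)) (- a) b).
    { apply RInt_ext. intros x _. unfold scal; simpl; unfold mult; simpl. rewrite Rmult_1_l. f_equal. ring. }
    rewrite <- E2, E. replace (1 * - a + - m) with (- (a + m)) by ring. replace (1 * b + - m) with (b - m) by ring.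
    apply HM. pose proof (Rle_abs (- m)) as H; rewrite Rabs_Ropp in H; lra. pose proof (Rle_abs m); lra.
Qed.

Lemma iRc_is_int f I : iRc f I -> is_int_R f I.
Proof.
  intros [cf HI] eps He. destruct (HI eps He) as [M HM]. exists M. intros a b Ha Hb.
  exists (ex_RInt_Reals_0 f (- a) b (exRI f (- a) b cf)).
  rewrite <- RInt_Reals. auto.
Qed.

Lemma isRInt_inv2 B u v : 0 < u -> u <= v -> is_RInt (fun t => B / (t * t)) u v (B / u - B / v).
Proof.
  intros hu huv.
  replace (B / u - B / v) with (minus ((fun t => - B / t) v) ((fun t => - B / t) u)).
  2: { unfold minus, plus, opp; simpl. field. lra. }
  apply (is_RInt_derive (V:=R_CompleteNormedModule)).
  - intros x Hx. rewrite Rmin_left in Hx by lra. rewrite Rmax_right in Hx by lra.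
    auto_derive. lra. field. lra.
  - intros x Hx. rewrite Rmin_left in Hx by lra. rewrite Rmax_right in Hx by lra.
    apply (@ex_derive_continuous R_AbsRing R_NormedModule). auto_derive. apply Rgt_not_eq; nra.
Qed.
Lemma isRInt_inv2n B u v : u <= v -> v < 0 -> is_RInt (fun t => B / (t * t)) u v (B / u - B / v).
Proof.
  intros huv hv.
  replace (B / u - B / v) with (minus ((fun t => - B / t) v) ((fun t => - B / t) u)).
  2: { unfold minus, plus, opp; simpl. field. lra. }
  apply (is_RInt_derive (V:=R_CompleteNormedModule)).
  - intros x Hx. rewrite Rmin_left in Hx by lra. rewrite Rmax_right in Hx by lra.
    auto_derive. lra. field. lra.
  - intros x Hx. rewrite Rmin_left in Hx by lra. rewrite Rmax_right in Hx by lra.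
    apply (@ex_derive_continuous R_AbsRing R_NormedModule). auto_derive. apply Rgt_not_eq; nra.
Qed.

Section Dom.
Variables (f : R -> R) (B : R).
Hypothesis cf : cont f.
Hypothesis Hdom : forall x, Rabs (f x) <= B / (1 + x * x).

Lemma absRInt_le_dom u v (d : R -> R) D : u <= v -> is_RInt d u v D ->
  (forall t, u <= t <= v -> B / (1 + t * t) <= d t) -> Rabs (RInt f u v) <= D.
Proof.
  intros huv Hd Hle.
  eapply Rle_trans. apply abs_RInt_le. auto. apply exRI; auto.
  rewrite <- (is_RInt_unique d u v D Hd).
  apply RInt_le. auto.
  apply exRI. intros x. apply (continuous_comp f Rabs). apply cf. apply ElemFct.continuous_Rabs.
  eexists; eauto.
  intros x Hx. eapply Rle_trans. apply Hdom. apply Hle. lra.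
Qed.

Lemma B_nonneg : 0 <= B.
Proof.
  pose proof (Hdom 0). pose proof (Rabs_pos (f 0)).
  replace (1 + 0 * 0) with 1 in H by ring. lra.
Qed.

Lemma tail_pos M u v : 1 <= M -> M <= u -> M <= v -> Rabs (RInt f u v) <= B / M.
Proof.
  intros hM hu hv. pose proof B_nonneg.
  assert (key : forall u v, M <= u -> u <= v -> Rabs (RInt f u v) <= B / M).
  { clear u v hu hv. intros u v hu huv.
    eapply Rle_trans. apply (absRInt_le_dom u v (fun t => B / (t * t)) (B / u - B / v)). auto.
    apply isRInt_inv2; lra.
    intros t Ht. unfold Rdiv. apply Rmult_le_compat_l. auto. apply Rinv_le_contravar. nra. lra.
    assert (B / u <= B / M). { unfold Rdiv. apply Rmult_le_compat_l. auto. apply Rinv_le_contravar; lra. }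
    assert (0 <= B / v). { unfold Rdiv. apply Rmult_le_pos. auto. left; apply Rinv_0_lt_compat; lra. }
    lra. }
  destruct (Rle_dec u v). apply key; auto.
  rewrite <- (opp_RInt_swap (V:=R_CompleteNormedModule)). 2: apply exRI; auto.
  unfold opp; simpl. rewrite Rabs_Ropp. apply key; lra.
Qed.

Lemma tail_neg M u v : 1 <= M -> u <= - M -> v <= - M -> Rabs (RInt f u v) <= B / M.
Proof.
  intros hM hu hv. pose proof B_nonneg.
  assert (key : forall u v, v <= - M -> u <= v -> Rabs (RInt f u v) <= B / M).
  { clear u v hu hv. intros u v hv huv.
    eapply Rle_trans. apply (absRInt_le_dom u v (fun t => B / (t * t)) (B / u - B / v)). auto.
    apply isRInt_inv2n; lra.
    intros t Ht. unfold Rdiv. apply Rmult_le_compat_l. auto. apply Rinv_le_contravar. nra. lra.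
    assert (- (B / v) <= B / M).
    { replace (- (B / v)) with (B / (- v)) by (field; lra).
      unfold Rdiv. apply Rmult_le_compat_l. auto. apply Rinv_le_contravar; lra. }
    assert (B / u <= 0).
    { replace (B / u) with (- (B / (- u))) by (field; lra).
      assert (0 <= B / (- u)). { unfold Rdiv. apply Rmult_le_pos. auto. left; apply Rinv_0_lt_compat; lra. }
      lra. }
    lra. }
  destruct (Rle_dec u v). apply key; auto.
  rewrite <- (opp_RInt_swap (V:=R_CompleteNormedModule)). 2: apply exRI; auto.
  unfold opp; simpl. rewrite Rabs_Ropp. apply key; lra.
Qed.

Lemma diff_bound M a b a' b' : 1 <= M -> M <= a -> M <= b -> M <= a' -> M <= b' ->
  Rabs (RInt f (- a) b - RInt f (- a') b') <= 2 * B / M.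
Proof.
  intros hM ha hb ha' hb'.
  rewrite <- (RInt_Chasles (V:=R_CompleteNormedModule) f (- a) (- a') b). 2,3: apply exRI; auto.
  rewrite <- (RInt_Chasles (V:=R_CompleteNormedModule) f (- a') b' b). 2,3: apply exRI; auto.
  unfold plus; simpl.
  replace (RInt f (- a) (- a') + (RInt f (- a') b' + RInt f b' b) - RInt f (- a') b')
    with (RInt f (- a) (- a') + RInt f b' b) by ring.
  eapply Rle_trans. apply Rabs_triang.
  pose proof (tail_neg M (- a) (- a') hM ltac:(lra) ltac:(lra)).
  pose proof (tail_pos M b' b hM hb' hb).
  replace (2 * B / M) with (B / M + B / M) by (field; lra). lra.
Qed.

Lemma div_small c X eps : 0 <= c -> 0 < eps -> c / eps < X -> c / X < eps.
Proof.
  intros hc he hX. assert (0 <= c / eps) by (apply Rdiv_le_0_compat; lra).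
  apply Rlt_div_l. lra. apply Rlt_div_l in hX; auto. lra.
Qed.

Lemma iR_exists : exists I, iR f I.
Proof.
  pose proof B_nonneg as HB.
  set (s := fun n : nat => RInt f (- (INR n + 1)) (INR n + 1)).
  assert (Hc : Cauchy_crit s).
  { intros eps He. destruct (INR_unbounded (2 * B / eps)) as [N HN].
    exists N. intros p q Hp Hq. unfold R_dist, s.
    assert (INR N <= INR p) by (apply le_INR; lia).
    assert (INR N <= INR q) by (apply le_INR; lia).
    pose proof (pos_INR N).
    eapply Rle_lt_trans. apply (diff_bound (INR N + 1)); lra.
    apply div_small; lra. }
  destruct (Rcomplete.R_complete s Hc) as [L HL].
  exists L. intros eps He.
  destruct (INR_unbounded (4 * B / eps)) as [N0 HN0].
  exists (INR N0 + 1). intros a b Ha Hb.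
  destruct (HL (eps / 2)) as [N1 HN1]. lra.
  set (m := max N0 N1). assert (INR N0 <= INR m) by (apply le_INR; lia).
  specialize (HN1 m ltac:(lia)). unfold R_dist in HN1.
  pose proof (pos_INR N0).
  assert (Hd : Rabs (RInt f (- a) b - s m) <= 2 * B / (INR N0 + 1)).
  { unfold s. apply diff_bound; lra. }
  assert (2 * B / (INR N0 + 1) < eps / 2).
  { apply div_small; try lra. replace (2 * B / (eps / 2)) with (4 * B / eps) by (field; lra). lra. }
  replace (RInt f (- a) b - L) with ((RInt f (- a) b - s m) + (s m - L)) by ring.
  eapply Rle_lt_trans. apply Rabs_triang. lra.
Qed.
End Dom.

Lemma iR_ftc F f I : (forall x, is_derive F x (f x)) -> cont f ->
  (forall eps, 0 < eps -> exists M, forall x, M <= Rabs x -> Rabs (F x) < eps) -> iR f I -> I = 0.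
Proof.
  intros HF cf Hlim HI. apply Rabs_eq_0. apply Rle_antisym; [|apply Rabs_pos].
  apply Rnot_lt_le; intros Hp.
  destruct (HI (Rabs I / 3)) as [M1 H1]. lra. destruct (Hlim (Rabs I / 3)) as [M2 H2]. lra.
  set (M := Rmax M1 M2).
  specialize (H1 M M (Rmax_l _ _) (Rmax_l _ _)).
  assert (E : RInt f (- M) M = F M - F (- M)).
  { apply is_RInt_unique. apply (is_RInt_derive (V:=R_CompleteNormedModule) F f). intros; auto. intros; apply cf. }
  rewrite E in H1.
  assert (Rabs (F M) < Rabs I / 3). { apply H2. eapply Rle_trans. apply Rmax_r. apply Rle_abs. }
  assert (Rabs (F (- M)) < Rabs I / 3). { apply H2. rewrite Rabs_Ropp. eapply Rle_trans. apply Rmax_r. apply Rle_abs. }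
  pose proof (Rabs_triang (F M - F (- M) - I) (- (F M) + F (- M))) as T.
  replace (F M - F (- M) - I + (- F M + F (- M))) with (- I) in T by ring.
  rewrite Rabs_Ropp in T. pose proof (Rabs_triang (- F M) (F (- M))). rewrite Rabs_Ropp in H3. lra.
Qed.

Definition iRv f := epsilon (inhabits 0) (fun I => iR f I).
Lemma iRv_spec f : (exists I, iR f I) -> iR f (iRv f).
Proof. intros H. unfold iRv. apply epsilon_spec. auto. Qed.
Lemma iRc_dom f B : cont f -> (forall x, Rabs (f x) <= B / (1 + x * x)) -> iRc f (iRv f).
Proof. intros cf H. split; auto. apply iRv_spec. apply (iR_exists f B); auto. Qed.

Definition iR2c (F : R -> R -> R) I := exists G, (forall y1, iRc (F y1) (G y1)) /\ iRc G I.

Lemma iR2c_is_int2 F I : iR2c F I -> is_int_R2 F I.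
Proof. intros [G [H1 H2]]. exists G. split. intros; apply iRc_is_int; auto. apply iRc_is_int; auto. Qed.

Lemma iR2c_ext F F' I : (forall y1 y2, F y1 y2 = F' y1 y2) -> iR2c F I -> iR2c F' I.
Proof. intros E [G [H1 H2]]. exists G. split; auto. intros y1. eapply iRc_ext. 2: apply H1. auto. Qed.

Lemma iR2c_prod p q P Q : iRc p P -> iRc q Q -> iR2c (fun y1 y2 => p y1 * q y2) (P * Q).
Proof.
  intros Hp Hq. exists (fun y1 => p y1 * Q). split.
  - intros y1. apply iRc_scal; auto.
  - eapply iRc_ext. 2: { rewrite Rmult_comm. apply (iRc_scal Q p P Hp). } intros; simpl; ring.
Qed.

Lemma iR2c_plus F H I J : iR2c F I -> iR2c H J -> iR2c (fun y1 y2 => F y1 y2 + H y1 y2) (I + J).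
Proof.
  intros [G1 [A1 B1]] [G2 [A2 B2]]. exists (fun y1 => G1 y1 + G2 y1). split.
  intros y1. apply iRc_plus; auto. apply iRc_plus; auto.
Qed.
Lemma iR2c_scal c F I : iR2c F I -> iR2c (fun y1 y2 => c * F y1 y2) (c * I).
Proof.
  intros [G1 [A1 B1]]. exists (fun y1 => c * G1 y1). split.
  intros y1. apply iRc_scal; auto. apply iRc_scal; auto.
Qed.
Lemma iR2c_zero : iR2c (fun _ _ => 0) 0.
Proof. exists (fun _ => 0). split. intros; apply iRc_zero. apply iRc_zero. Qed.
Lemma iR2c_rsum n (F : nat -> R -> R -> R) (I : nat -> R) :
  (forall t, (t < n)%nat -> iR2c (F t) (I t)) -> iR2c (fun y1 y2 => rsum n (fun t => F t y1 y2)) (rsum n I).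
Proof.
  induction n; intros H; simpl. apply iR2c_zero.
  apply (iR2c_plus (fun y1 y2 => rsum n (fun t => F t y1 y2)) (F n)). apply IHn; intros; apply H; lia. apply H; lia.
Qed.
Lemma iR2c_rs4 n F I : (forall k k' j j', (k < n)%nat -> (k' < n)%nat -> (j < n)%nat -> (j' < n)%nat ->
  iR2c (F k k' j j') (I k k' j j')) ->
  iR2c (fun y1 y2 => rs4 n (fun k k' j j' => F k k' j j' y1 y2)) (rs4 n I).
Proof.
  intros H. unfold rs4.
  apply (iR2c_rsum n (fun k y1 y2 => rsum n (fun k' => rsum n (fun j => rsum n (fun j' => F k k' j j' y1 y2))))).
  intros. apply (iR2c_rsum n (fun k' y1 y2 => rsum n (fun j => rsum n (fun j' => F t k' j j' y1 y2)))).
  intros. apply (iR2c_rsum n (fun j y1 y2 => rsum n (fun j' => F t t0 j j' y1 y2))).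
  intros. apply (iR2c_rsum n (fun j' y1 y2 => F t t0 t1 j' y1 y2)).
  intros. auto.
Qed.

Lemma mono_deriv h h' : (forall x, is_derive h x (h' x)) -> cont h' ->
  (forall x, 0 <= x -> 0 <= h' x) -> forall t, 0 <= t -> h 0 <= h t.
Proof.
  intros Hd Hc Hp t ht.
  assert (E : RInt h' 0 t = h t - h 0).
  { apply is_RInt_unique. apply (is_RInt_derive (V:=R_CompleteNormedModule) h h'). intros; auto. intros; apply Hc. }
  assert (0 <= RInt h' 0 t). { apply RInt_ge_0. auto. apply exRI; auto. intros; apply Hp; lra. }
  lra.
Qed.

Lemma sin_le_id t : 0 <= t -> sin t <= t.
Proof.
  intros ht.
  assert (D : forall x, is_derive (fun t => t - sin t) x ((fun t => 1 - cos t) x)).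
  { intros x. auto_derive. auto. ring. }
  assert (C : cont (fun t => 1 - cos t)). { apply (cont_deriv (fun t => 1 - cos t)). intros x. auto_derive. auto. }
  assert (P : forall x, 0 <= x -> 0 <= (fun t => 1 - cos t) x). { intros x _. pose proof (COS_bound x). simpl; lra. }
  pose proof (mono_deriv _ _ D C P t ht) as M. simpl in M. rewrite sin_0 in M. lra.
Qed.

Lemma cos_ge t : 1 - t * t / 2 <= cos t.
Proof.
  assert (K : forall t, 0 <= t -> 1 - t * t / 2 <= cos t).
  { intros s hs.
    assert (D : forall x, is_derive (fun t => cos t - 1 + t * t / 2) x ((fun t => - sin t + t) x)).
    { intros x. auto_derive. auto. field. }
    assert (C : cont (fun t => - sin t + t)). { apply (cont_deriv (fun t => - sin t + t)). intros x. auto_derive. auto. }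
    assert (P : forall x, 0 <= x -> 0 <= (fun t => - sin t + t) x). { intros x hx. pose proof (sin_le_id x hx). simpl; lra. }
    pose proof (mono_deriv _ _ D C P s hs) as M. simpl in M. rewrite cos_0 in M. lra. }
  destruct (Rle_dec 0 t). apply K; auto. rewrite <- cos_neg. replace (t * t) with (- t * - t) by ring. apply K; lra.
Qed.

Lemma cos_approx t : Rabs (cos t - 1) <= t * t / 2.
Proof. pose proof (cos_ge t). pose proof (COS_bound t). apply Rabs_le. lra. Qed.

Lemma sin_approx3 t : Rabs (sin t - t) <= Rabs t * Rabs t * Rabs t / 6.
Proof.
  assert (K : forall t, 0 <= t -> Rabs (sin t - t) <= t * t * t / 6).
  { intros s hs.
    assert (D : forall x, is_derive (fun t => sin t - t + t * t * t / 6) x ((fun t => cos t - 1 + t * t / 2) x)).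
    { intros x. auto_derive. auto. field. }
    assert (C : cont (fun t => cos t - 1 + t * t / 2)). { apply (cont_deriv (fun t => cos t - 1 + t * t / 2)). intros x. auto_derive. auto. }
    assert (P : forall x, 0 <= x -> 0 <= (fun t => cos t - 1 + t * t / 2) x). { intros x hx. pose proof (cos_ge x). simpl; lra. }
    pose proof (mono_deriv _ _ D C P s hs) as M. simpl in M. rewrite sin_0 in M.
    pose proof (sin_le_id s hs). assert (0 <= s*s*s) by (apply Rmult_le_pos; [apply Rmult_le_pos|]; lra). apply Rabs_le. lra. }
  destruct (Rle_dec 0 t).
  - rewrite (Rabs_right t) by lra. apply K; auto.
  - rewrite (Rabs_left t) by lra. replace (sin t - t) with (- (sin (- t) - (- t))) by (rewrite sin_neg; ring).
    rewrite Rabs_Ropp. replace (- t * - t * - t / 6) with ((- t) * (- t) * (- t) / 6) by ring. apply K; lra.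
Qed.

Lemma exp_ge_lin t : t <= exp t.
Proof. pose proof (exp_ineq1_le t). lra. Qed.
Lemma exp_ge_sq t : 0 <= t -> t * t / 4 <= exp t.
Proof.
  intros ht. replace (exp t) with (exp (t/2) * exp (t/2)) by (rewrite <- exp_plus; f_equal; field).
  pose proof (exp_ge_lin (t/2)). assert (0 <= t/2) by lra.
  replace (t * t / 4) with ((t/2) * (t/2)) by field. apply Rmult_le_compat; lra.
Qed.
Lemma exp_ge_cube t : 0 <= t -> t * t * t / 27 <= exp t.
Proof.
  intros ht. replace (exp t) with (exp (t/3) * exp (t/3) * exp (t/3)) by (rewrite <- !exp_plus; f_equal; field).
  pose proof (exp_ge_lin (t/3)). assert (0 <= t/3) by lra.
  replace (t * t * t / 27) with ((t/3) * (t/3) * (t/3)) by field.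
  apply Rmult_le_compat; try lra. apply Rmult_le_pos; lra. apply Rmult_le_compat; lra.
Qed.

Definition gbound A c := A * (1 + 1 / c + 4 / (c * c) + 27 / (c * c * c)).

Lemma gauss_dom_pt A c x : 0 < c -> 0 <= A ->
  A * (1 + x * x * (x * x)) * exp (- (c * (x * x))) <= gbound A c / (1 + x * x).
Proof.
  intros hc hA. set (y := x * x). assert (hy : 0 <= y) by (unfold y; nra).
  set (t := c * y). assert (ht : 0 <= t) by (unfold t; nra).
  pose proof (exp_pos t) as he. set (e := exp t) in *.
  assert (H0 : 1 <= e). { pose proof (exp_ineq1_le t). unfold e; lra. }
  assert (H1 : t <= e) by (apply exp_ge_lin).
  assert (H2 : t * t / 4 <= e) by (apply exp_ge_sq; auto).
  assert (H3 : t * t * t / 27 <= e) by (apply exp_ge_cube; auto).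
  rewrite exp_Ropp. fold e.
  assert (y <= e / c). { apply (proj1 (Rle_div_r y e c hc)). unfold t in H1. rewrite Rmult_comm; exact H1. }
  assert (y * y <= 4 * e / (c * c)). { apply (proj1 (Rle_div_r (y*y) (4*e) (c*c) ltac:(nra))). replace (y*y*(c*c)) with (t*t) by (unfold t; ring). lra. }
  assert (0 < c * c) by nra. assert (y * y * y <= 27 * e / (c * c * c)). { apply (proj1 (Rle_div_r (y*y*y) (27*e) (c*c*c) ltac:(nra))). replace (y*y*y*(c*c*c)) with (t*t*t) by (unfold t; ring). lra. }
  unfold gbound. assert (Hy1 : 1 + y > 0) by lra. apply (proj1 (Rle_div_r _ _ (1+y) Hy1)).
  replace (A * (1 + y * y) * / e * (1 + y)) with (A * (1 + y + y * y + y * y * y) / e) by (field; lra).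
  apply (proj2 (Rle_div_l _ _ _ he)).
  replace (A * (1 + 1 / c + 4 / (c * c) + 27 / (c * c * c)) * e) with
     (A * (e + e / c + 4 * e / (c * c) + 27 * e / (c * c * c))) by (field; lra).
  apply Rmult_le_compat_l. auto. lra.
Qed.

Lemma iRc_gauss f A c : cont f -> 0 < c -> 0 <= A ->
  (forall x, Rabs (f x) <= A * (1 + x * x * (x * x)) * exp (- (c * (x * x)))) -> iRc f (iRv f).
Proof.
  intros cf hc hA H. apply (iRc_dom f (gbound A c)); auto.
  intros x. eapply Rle_trans. apply H. apply gauss_dom_pt; auto.
Qed.

Lemma gauss_decay F A c : 0 < c -> 0 <= A ->
  (forall x, Rabs (F x) <= A * (1 + x * x * (x * x)) * exp (- (c * (x * x)))) ->
  forall eps, 0 < eps -> exists M, forall x, M <= Rabs x -> Rabs (F x) < eps.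
Proof.
  intros hc hA H eps he. set (B := gbound A c).
  assert (hB : 0 <= B). { unfold B, gbound. apply Rmult_le_pos; auto.
    assert (0 < c * c) by nra. assert (0 < c * c * c) by nra.
    pose proof (Rdiv_le_0_compat 1 c ltac:(lra) hc). pose proof (Rdiv_le_0_compat 4 (c*c) ltac:(lra) H0).
    pose proof (Rdiv_le_0_compat 27 (c*c*c) ltac:(lra) H1). lra. }
  exists (B / eps + 1). intros x hx.
  eapply Rle_lt_trans. apply H. eapply Rle_lt_trans. apply gauss_dom_pt; auto. fold B.
  assert (0 <= B / eps) by (apply Rdiv_le_0_compat; lra).
  assert (1 <= Rabs x) by lra.
  assert (E : Rabs x * Rabs x = x * x) by (unfold Rabs; destruct Rcase_abs; ring).
  assert (Rabs x <= x * x) by nra.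
  apply div_small; auto. lra.
Qed.

Lemma exp_le_mono x y : x <= y -> exp x <= exp y.
Proof. intros [H|H]. left; apply exp_increasing; auto. subst; lra. Qed.

Lemma iR_pos f I m : cont f -> (forall x, 0 <= f x) -> (forall x, -1 <= x <= 1 -> m <= f x) -> 0 < m ->
  iR f I -> 0 < I.
Proof.
  intros cf Hp Hm hm HI. destruct (HI m hm) as [M HM].
  set (M' := Rmax M 1). specialize (HM M' M' (Rmax_l _ _) (Rmax_l _ _)).
  assert (h1 : 1 <= M') by apply Rmax_r.
  rewrite <- (RInt_Chasles (V:=R_CompleteNormedModule) f (- M') (-1) M') in HM. 2,3: apply exRI; auto.
  rewrite <- (RInt_Chasles (V:=R_CompleteNormedModule) f (-1) 1 M') in HM. 2,3: apply exRI; auto.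
  unfold plus in HM; simpl in HM.
  assert (0 <= RInt f (- M') (-1)). { apply RInt_ge_0. lra. apply exRI; auto. intros; auto. }
  assert (0 <= RInt f 1 M'). { apply RInt_ge_0. lra. apply exRI; auto. intros; auto. }
  assert (RInt (fun _ => m) (-1) 1 <= RInt f (-1) 1).
  { apply RInt_le. lra. apply exRI; apply cont_const. apply exRI; auto. intros; apply Hm; lra. }
  rewrite RInt_const in H1. unfold scal in H1; simpl in H1; unfold mult in H1; simpl in H1.
  apply Rabs_def2 in HM. lra.
Qed.

Lemma abs_le_poly x : Rabs x <= 1 + x * x * (x * x).
Proof.
  assert (E : Rabs x * Rabs x = x * x) by (unfold Rabs; destruct Rcase_abs; ring).
  pose proof (Rabs_pos x). destruct (Rle_dec (Rabs x) 1). nra.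
  assert (Rabs x <= x * x) by nra. nra.
Qed.
Lemma sq_le_poly x : x * x <= 1 + x * x * (x * x).
Proof. nra. Qed.
Lemma cont_poly_exp c : cont (fun x => exp (- (c * (x * x)))).
Proof. apply (cont_deriv (fun x => exp (- (c * (x * x))))). intros; auto_derive; auto. Qed.

Section Xcase.
Variable sigma : R.
Hypothesis hs : 0 < sigma.

Definition gx y := exp (- (1 / (2 * sigma ^ 2) * (y * y))).
Definition Zx := iRv gx.
Definition Cx := Rpower (2 * PI * sigma ^ 2) (- / 4).

Lemma cx_pos : 0 < 1 / (2 * sigma ^ 2).
Proof. apply Rdiv_lt_0_compat. lra. nra. Qed.

Lemma gx_iRc : iRc gx Zx.
Proof.
  apply (iRc_gauss gx 1 (1 / (2 * sigma ^ 2))). apply cont_poly_exp. apply cx_pos. lra.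
  intros x. unfold gx. rewrite Rabs_right by (left; apply exp_pos).
  pose proof (exp_pos (- (1 / (2 * sigma ^ 2) * (x * x)))).
  assert (0 <= x*x*(x*x)*exp (- (1 / (2 * sigma ^ 2) * (x * x)))) by (apply Rmult_le_pos; [nra | lra]).
  nra.
Qed.

Lemma Zx_pos : 0 < Zx.
Proof.
  destruct gx_iRc as [cg HI].
  apply (iR_pos gx Zx (exp (- (1 / (2 * sigma ^ 2))))); auto.
  intros; left; apply exp_pos.
  intros x Hx. unfold gx. apply exp_le_mono. apply Ropp_le_contravar.
  assert (x * x <= 1) by nra. pose proof cx_pos. rewrite <- (Rmult_1_r (1 / (2 * sigma ^ 2))) at 2.
  apply Rmult_le_compat_l; lra.
  apply exp_pos.
Qed.

Definition Ex d := exp (- (d * d) / (8 * sigma ^ 2)).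

Lemma phi_prod x al be : phi sigma (x - al) * phi sigma (x - be) =
  Cx * Cx * Ex (al - be) * gx (x - (al + be) / 2).
Proof.
  unfold phi, gx, Cx, Ex. set (C := Rpower (2 * PI * sigma ^ 2) (- / 4)).
  replace (C * exp (- (x - al) ^ 2 / (4 * sigma ^ 2)) * (C * exp (- (x - be) ^ 2 / (4 * sigma ^ 2))))
    with (C * C * (exp (- (x - al) ^ 2 / (4 * sigma ^ 2)) * exp (- (x - be) ^ 2 / (4 * sigma ^ 2)))) by ring.
  assert (E : exp (- (x - al) ^ 2 / (4 * sigma ^ 2)) * exp (- (x - be) ^ 2 / (4 * sigma ^ 2)) =
    exp (- ((al - be) * (al - be)) / (8 * sigma ^ 2)) *
    exp (- (1 / (2 * sigma ^ 2) * ((x - (al + be) / 2) * (x - (al + be) / 2))))).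
  { rewrite <- !exp_plus. f_equal. field. lra. }
  rewrite E. ring.
Qed.

Lemma ygx_iRc : iRc (fun y => y * gx y) 0.
Proof.
  assert (H : iRc (fun y => y * gx y) (iRv (fun y => y * gx y))).
  { apply (iRc_gauss _ 1 (1 / (2 * sigma ^ 2))).
    apply cont_mult. intros x; apply continuous_id. apply gx_iRc. apply cx_pos. lra.
    intros x. unfold gx. rewrite Rabs_mult, (Rabs_right (exp _)) by (left; apply exp_pos).
    pose proof (exp_pos (- (1 / (2 * sigma ^ 2) * (x * x)))). pose proof (abs_le_poly x).
    rewrite Rmult_1_l. apply Rmult_le_compat_r; lra. }
  destruct H as [c1 H]. split; auto.
  rewrite (iR_odd _ _ c1) in H; auto.
  intros x. unfold gx. replace (- x * - x) with (x * x) by ring. ring.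
Qed.

Lemma iRc_X0 al be : iRc (fun x => phi sigma (x - al) * phi sigma (x - be)) (Cx * Cx * Ex (al - be) * Zx).
Proof.
  eapply iRc_ext. intros x. symmetry. apply phi_prod.
  apply iRc_scal. apply (iRc_trans gx). apply gx_iRc.
Qed.

Lemma iRc_X1 al be : iRc (fun x => x * (phi sigma (x - al) * phi sigma (x - be)))
   (Cx * Cx * Ex (al - be) * ((al + be) / 2 * Zx)).
Proof.
  set (m := (al + be) / 2).
  assert (H : iRc (fun y => y * gx y + m * gx y) (0 + m * Zx)).
  { apply iRc_plus. apply ygx_iRc. apply iRc_scal. apply gx_iRc. }
  rewrite Rplus_0_l in H.
  apply (iRc_trans _ _ m) in H.
  eapply iRc_ext. 2: apply (iRc_scal (Cx * Cx * Ex (al - be))); exact H.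
  intros x. simpl. rewrite phi_prod. fold m. ring.
Qed.
End Xcase.

Section Kcase.
Variable sigma : R.
Hypothesis hs : 0 < sigma.

Definition Ck := Rpower (2 * sigma ^ 2 / PI) (/ 4).
Definition wk k := phit sigma k * phit sigma k.
Definition Zw := iRv wk.
Definition Z2 := iRv (fun k => k * k * wk k).
Definition Z4 := iRv (fun k => k * k * (k * k) * wk k).
Definition J0 g := iRv (fun k => wk k * cos (g * k)).
Definition J1 g := iRv (fun k => k * wk k * sin (g * k)).

Lemma wk_eq k : wk k = Ck * Ck * exp (- (2 * sigma ^ 2 * (k * k))).
Proof.
  unfold wk, phit, Ck. set (C := Rpower (2 * sigma ^ 2 / PI) (/ 4)).
  replace (C * exp (- k ^ 2 * sigma ^ 2) * (C * exp (- k ^ 2 * sigma ^ 2)))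
    with (C * C * (exp (- k ^ 2 * sigma ^ 2) * exp (- k ^ 2 * sigma ^ 2))) by ring.
  rewrite <- exp_plus. f_equal. f_equal. ring.
Qed.
Lemma wk_pos k : 0 < wk k.
Proof. unfold wk, phit. unfold Rpower. pose proof (exp_pos (/ 4 * ln (2 * sigma ^ 2 / PI))).
  pose proof (exp_pos (- k ^ 2 * sigma ^ 2)). apply Rmult_lt_0_compat; apply Rmult_lt_0_compat; auto. Qed.
Lemma ck_pos : 0 < 2 * sigma ^ 2.
Proof. nra. Qed.
Lemma cont_wk : cont wk.
Proof. apply (cont_deriv wk). intros x. unfold wk, phit. auto_derive. auto. Qed.

Lemma dom_wk f M : cont f -> 0 <= M -> (forall k, Rabs (f k) <= M * (1 + k * k * (k * k)) * wk k) ->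
  iRc f (iRv f).
Proof.
  intros cf hM H. apply (iRc_gauss f (M * (Ck * Ck)) (2 * sigma ^ 2)); auto. apply ck_pos.
  apply Rmult_le_pos; auto. apply Rle_0_sqr.
  intros k. eapply Rle_trans. apply H. rewrite wk_eq. right; ring.
Qed.

Lemma poly0 k : 1 <= 1 + k * k * (k * k).
Proof. nra. Qed.

Lemma Zw_iRc : iRc wk Zw.
Proof.
  apply (dom_wk wk 1). apply cont_wk. lra. intros k. pose proof (wk_pos k). pose proof (poly0 k).
  rewrite Rabs_right by lra. nra.
Qed.
Lemma Z2_iRc : iRc (fun k => k * k * wk k) Z2.
Proof.
  apply (dom_wk _ 1). apply cont_mult. apply cont_mult; intros x; apply continuous_id. apply cont_wk. lra.
  intros k. pose proof (wk_pos k). pose proof (sq_le_poly k).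
  rewrite Rabs_right by nra. nra.
Qed.
Lemma Z4_iRc : iRc (fun k => k * k * (k * k) * wk k) Z4.
Proof.
  apply (dom_wk _ 1). apply cont_mult. apply cont_mult; apply cont_mult; intros x; apply continuous_id. apply cont_wk. lra.
  intros k. pose proof (wk_pos k). assert (0 <= k * k * (k * k)) by nra.
  rewrite Rabs_right by nra. nra.
Qed.
Lemma cont_cos g : cont (fun k => cos (g * k)).
Proof. apply (cont_deriv (fun k => cos (g * k))). intros; auto_derive; auto. Qed.
Lemma cont_sin g : cont (fun k => sin (g * k)).
Proof. apply (cont_deriv (fun k => sin (g * k))). intros; auto_derive; auto. Qed.
Lemma cont_idR : cont (fun k => k).
Proof. intros x; apply continuous_id. Qed.

Lemma J0_iRc g : iRc (fun k => wk k * cos (g * k)) (J0 g).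
Proof.
  apply (dom_wk _ 1). apply cont_mult. apply cont_wk. apply cont_cos. lra.
  intros k. pose proof (wk_pos k). pose proof (poly0 k). pose proof (COS_bound (g * k)).
  rewrite Rabs_mult, (Rabs_right (wk k)) by lra.
  assert (Rabs (cos (g * k)) <= 1) by (apply Rabs_le; lra). nra.
Qed.
Lemma J1_iRc g : iRc (fun k => k * wk k * sin (g * k)) (J1 g).
Proof.
  apply (dom_wk _ 1). apply cont_mult. apply cont_mult. apply cont_idR. apply cont_wk. apply cont_sin. lra.
  intros k. pose proof (wk_pos k). pose proof (abs_le_poly k). pose proof (SIN_bound (g * k)).
  rewrite !Rabs_mult, (Rabs_right (wk k)) by lra.
  assert (Rabs (sin (g * k)) <= 1) by (apply Rabs_le; lra). pose proof (Rabs_pos (sin (g * k))).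
  pose proof (Rabs_pos k).
  apply Rle_trans with (Rabs k * wk k * 1). apply Rmult_le_compat_l. nra. auto. nra.
Qed.

Lemma odd_zero f M : cont f -> 0 <= M -> (forall k, Rabs (f k) <= M * (1 + k * k * (k * k)) * wk k) ->
  (forall x, f (- x) = - f x) -> iRc f 0.
Proof.
  intros cf hM H Ho. destruct (dom_wk f M cf hM H) as [_ HI]. split; auto.
  rewrite (iR_odd f _ cf Ho HI) in HI. auto.
Qed.

Lemma wk_even k : wk (- k) = wk k.
Proof. rewrite !wk_eq. replace (- k * - k) with (k * k) by ring. auto. Qed.

Lemma S_zero g : iRc (fun k => wk k * sin (g * k)) 0.
Proof.
  apply (odd_zero _ 1). apply cont_mult. apply cont_wk. apply cont_sin. lra.
  intros k. pose proof (wk_pos k). pose proof (poly0 k). pose proof (SIN_bound (g * k)).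
  rewrite Rabs_mult, (Rabs_right (wk k)) by lra.
  assert (Rabs (sin (g * k)) <= 1) by (apply Rabs_le; lra). nra.
  intros x. rewrite wk_even. replace (g * - x) with (- (g * x)) by ring. rewrite sin_neg. ring.
Qed.
Lemma C1_zero g : iRc (fun k => k * wk k * cos (g * k)) 0.
Proof.
  apply (odd_zero _ 1). apply cont_mult. apply cont_mult. apply cont_idR. apply cont_wk. apply cont_cos. lra.
  intros k. pose proof (wk_pos k). pose proof (abs_le_poly k). pose proof (COS_bound (g * k)).
  rewrite !Rabs_mult, (Rabs_right (wk k)) by lra.
  assert (Rabs (cos (g * k)) <= 1) by (apply Rabs_le; lra). pose proof (Rabs_pos (cos (g * k))).
  pose proof (Rabs_pos k).
  apply Rle_trans with (Rabs k * wk k * 1). apply Rmult_le_compat_l. nra. auto. nra.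
  intros x. rewrite wk_even. replace (g * - x) with (- (g * x)) by ring. rewrite cos_neg. ring.
Qed.

Lemma Ck_pos : 0 < Ck.
Proof. unfold Ck, Rpower. apply exp_pos. Qed.

Lemma Zw_pos : 0 < Zw.
Proof.
  destruct Zw_iRc as [c1 HI].
  apply (iR_pos wk Zw (Ck * Ck * exp (- (2 * sigma ^ 2)))); auto.
  intros; left; apply wk_pos.
  intros x Hx. rewrite wk_eq. pose proof Ck_pos. apply Rmult_le_compat_l. nra.
  apply exp_le_mono. apply Ropp_le_contravar. assert (x * x <= 1) by nra. pose proof ck_pos.
  rewrite <- (Rmult_1_r (2 * sigma ^ 2)) at 2. apply Rmult_le_compat_l; lra.
  pose proof Ck_pos. pose proof (exp_pos (- (2 * sigma ^ 2))). apply Rmult_lt_0_compat; nra.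
Qed.

Lemma nonneg_int f I : iRc f I -> (forall x, 0 <= f x) -> 0 <= I.
Proof. intros [cf HI] H. apply (iR_le (fun _ => 0) f 0 I); auto. apply cont_const. apply iRc_zero. Qed.

Lemma Z2_nonneg : 0 <= Z2.
Proof. apply (nonneg_int _ _ Z2_iRc). intros. pose proof (wk_pos x). assert (0 <= x * x) by nra. nra. Qed.
Lemma Z4_nonneg : 0 <= Z4.
Proof. apply (nonneg_int _ _ Z4_iRc). intros. pose proof (wk_pos x). assert (0 <= x * x * (x * x)) by nra. nra. Qed.

Lemma Z2_eq : Z2 = Zw / (4 * sigma ^ 2).
Proof.
  assert (H : iRc (fun k => wk k + (- (4 * sigma ^ 2)) * (k * k * wk k)) (Zw + (- (4 * sigma ^ 2)) * Z2)).
  { apply iRc_plus. apply Zw_iRc. apply iRc_scal. apply Z2_iRc. }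
  destruct H as [cf HI].
  assert (E : Zw + - (4 * sigma ^ 2) * Z2 = 0).
  { apply (iR_ftc (fun k => k * wk k) (fun k => wk k + - (4 * sigma ^ 2) * (k * k * wk k)) _); auto.
    - intros x.
      assert (Ef : forall t : R, Ck * Ck * (t * exp (- (2 * sigma ^ 2 * (t * t)))) = t * wk t).
      { intros t. rewrite wk_eq. ring. }
      apply (is_derive_ext _ _ x _ Ef).
      rewrite wk_eq. auto_derive. auto. replace (sigma * (sigma * 1)) with (sigma ^ 2) by ring. ring.
    - apply (gauss_decay _ (Ck * Ck) (2 * sigma ^ 2)). apply ck_pos. apply Rle_0_sqr.
      intros k. rewrite Rabs_mult, (Rabs_right (wk k)) by (left; apply wk_pos).
      pose proof (abs_le_poly k). rewrite wk_eq. pose proof Ck_pos.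
      pose proof (exp_pos (- (2 * sigma ^ 2 * (k * k)))).
      assert (0 < Ck * Ck * exp (- (2 * sigma ^ 2 * (k * k)))) by (apply Rmult_lt_0_compat; nra).
      nra. }
  assert (0 < 4 * sigma ^ 2) by nra.
  apply (Rmult_eq_reg_l (4 * sigma ^ 2)). field_simplify. lra. lra. lra.
Qed.

Lemma J0_le g : Rabs (J0 g) <= Zw.
Proof.
  destruct (J0_iRc g) as [c1 H1]. destruct Zw_iRc as [c2 H2].
  apply (iR_abs_le (fun k => wk k * cos (g * k)) wk); auto. intros k. pose proof (wk_pos k). pose proof (COS_bound (g * k)).
  rewrite Rabs_mult, (Rabs_right (wk k)) by lra.
  assert (Rabs (cos (g * k)) <= 1) by (apply Rabs_le; lra). nra.
Qed.

Lemma J0_approx g : Rabs (J0 g - Zw) <= g * g / 2 * Z2.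
Proof.
  assert (H : iRc (fun k => wk k * cos (g * k) + (-1) * wk k) (J0 g + (-1) * Zw)).
  { apply iRc_plus. apply J0_iRc. apply iRc_scal. apply Zw_iRc. }
  assert (H' : iRc (fun k => g * g / 2 * (k * k * wk k)) (g * g / 2 * Z2)).
  { apply iRc_scal. apply Z2_iRc. }
  destruct H as [c1 H1]. destruct H' as [c2 H2].
  replace (J0 g - Zw) with (J0 g + -1 * Zw) by ring.
  apply (iR_abs_le _ _ _ _ c1 c2 H1 H2).
  intros k. pose proof (wk_pos k). pose proof (cos_approx (g * k)).
  replace (wk k * cos (g * k) + -1 * wk k) with (wk k * (cos (g * k) - 1)) by ring.
  rewrite Rabs_mult, (Rabs_right (wk k)) by lra.
  replace (g * g / 2 * (k * k * wk k)) with (wk k * ((g * k) * (g * k) / 2)) by (unfold Rdiv; ring).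
  apply Rmult_le_compat_l; lra.
Qed.

Lemma J1_approx g : Rabs (J1 g - g * Z2) <= Rabs g * Rabs g * Rabs g / 6 * Z4.
Proof.
  assert (H : iRc (fun k => k * wk k * sin (g * k) + (- g) * (k * k * wk k)) (J1 g + (- g) * Z2)).
  { apply iRc_plus. apply J1_iRc. apply iRc_scal. apply Z2_iRc. }
  assert (H' : iRc (fun k => Rabs g * Rabs g * Rabs g / 6 * (k * k * (k * k) * wk k)) (Rabs g * Rabs g * Rabs g / 6 * Z4)).
  { apply iRc_scal. apply Z4_iRc. }
  destruct H as [c1 H1]. destruct H' as [c2 H2].
  replace (J1 g - g * Z2) with (J1 g + - g * Z2) by ring.
  apply (iR_abs_le _ _ _ _ c1 c2 H1 H2).
  intros k. pose proof (wk_pos k). pose proof (sin_approx3 (g * k)) as H3.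
  replace (k * wk k * sin (g * k) + - g * (k * k * wk k)) with ((k * wk k) * (sin (g * k) - g * k)) by ring.
  rewrite Rabs_mult, Rabs_mult, (Rabs_right (wk k)) by lra.
  rewrite Rabs_mult in H3.
  assert (E : Rabs k * Rabs k = k * k) by (unfold Rabs; destruct Rcase_abs; ring).
  pose proof (Rabs_pos k). pose proof (Rabs_pos g).
  apply Rle_trans with (Rabs k * wk k * (Rabs g * Rabs k * (Rabs g * Rabs k) * (Rabs g * Rabs k) / 6)).
  apply Rmult_le_compat_l. nra. auto.
  right. replace (k * k * (k * k)) with (Rabs k * Rabs k * (Rabs k * Rabs k)) by (rewrite E; ring). unfold Rdiv; ring.
Qed.
End Kcase.

Lemma exp_near1 u : 0 <= u -> Rabs (exp (- u) - 1) <= u.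
Proof.
  intros hu. pose proof (exp_ineq1_le (- u)). assert (exp (- u) <= 1).
  { rewrite <- exp_0. apply exp_le_mono. lra. }
  rewrite Rabs_left1 by lra. lra.
Qed.

Definition dlt Nv B := Rmin 1 (Nv / (2 * B + 2)).
Definition Krat Nv B Mv := 2 * B * (Nv + Rabs Mv) / (Nv * Nv).

Lemma ratio N M Nv Mv B g : 0 < Nv -> 0 <= B -> 0 < g -> g < dlt Nv B ->
  Rabs (N - Nv) <= g ^ 2 * B -> Rabs (M - g ^ 2 * Mv) <= g ^ 4 * B ->
  N <> 0 /\ Rabs (M / N - g ^ 2 * Mv / Nv) <= Krat Nv B Mv * g ^ 3 /\ 0 <= Krat Nv B Mv.
Proof.
  intros hN hB hg hd HN HM.
  assert (g1 : g < 1) by (eapply Rlt_le_trans; [apply hd|apply Rmin_l]).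
  assert (g2 : g < Nv / (2 * B + 2)) by (eapply Rlt_le_trans; [apply hd|apply Rmin_r]).
  assert (gB : g * B <= Nv / 2).
  { assert (g * (2*B+2) < Nv) by (apply (proj2 (Rlt_div_r g Nv (2*B+2) ltac:(lra))); auto). nra. }
  assert (g2le : g ^ 2 <= g) by (simpl; nra).
  assert (N >= Nv / 2).
  { apply abs_le_inv in HN. assert (g ^ 2 * B <= g * B) by (apply Rmult_le_compat_r; lra). lra. }
  assert (hK : 0 <= Krat Nv B Mv).
  { unfold Krat. apply Rdiv_le_0_compat. pose proof (Rabs_pos Mv). nra. nra. }
  split; [lra|split; auto].
  replace (M / N - g ^ 2 * Mv / Nv) with (((M - g ^ 2 * Mv) * Nv - g ^ 2 * Mv * (N - Nv)) / (N * Nv)) by (field; lra).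
  rewrite Rabs_div by nra. rewrite (Rabs_right (N * Nv)) by nra.
  apply (proj2 (Rle_div_l _ _ (N * Nv) ltac:(nra))).
  eapply Rle_trans. apply Rabs_triang. rewrite Rabs_Ropp, !Rabs_mult, (Rabs_right Nv) by lra.
  rewrite (Rabs_right (g ^ 2)) by (left; apply pow_lt; lra).
  assert (E1 : Rabs (M - g ^ 2 * Mv) * Nv <= g ^ 4 * B * Nv) by (apply Rmult_le_compat_r; lra).
  assert (E2 : g ^ 2 * Rabs Mv * Rabs (N - Nv) <= g ^ 2 * Rabs Mv * (g ^ 2 * B)).
  { apply Rmult_le_compat_l; auto. apply Rmult_le_pos. left; apply pow_lt; lra. apply Rabs_pos. }
  unfold Krat.
  assert (g ^ 4 <= g ^ 3) by (simpl; assert (0 < g*g*g) by (apply Rmult_lt_0_compat; nra); nra).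
  pose proof (Rabs_pos Mv).
  apply Rle_trans with (g ^ 4 * (B * (Nv + Rabs Mv))). nra.
  replace (2 * B * (Nv + Rabs Mv) / (Nv * Nv) * g ^ 3 * (N * Nv)) with
    (g ^ 3 * (B * (Nv + Rabs Mv)) * (2 * N / Nv)) by (field; lra).
  assert (1 <= 2 * N / Nv) by (apply Rle_div_r; lra).
  assert (0 <= B * (Nv + Rabs Mv)) by nra.
  assert (0 < g ^ 3) by (apply pow_lt; lra).
  apply Rle_trans with (g ^ 3 * (B * (Nv + Rabs Mv))). apply Rmult_le_compat_r; auto.
  rewrite <- (Rmult_1_r (g ^ 3 * (B * (Nv + Rabs Mv)))) at 1. apply Rmult_le_compat_l; [nra|auto].
Qed.

Definition ipr (z w : Defs.C) := Re z * Re w + Im z * Im w.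

Lemma weak_x (A B0 Cc W : Defs.C) : Cnorm2 W <> 0 ->
  Re (Cadd (Cdiv A W) (Cmul (Cconj (Cdiv B0 W)) (Cdiv Cc W))) = (ipr A W + ipr B0 Cc) / Cnorm2 W.
Proof.
  intros h. destruct A as [a1 a2], B0 as [b1 b2], Cc as [c1 c2], W as [w1 w2].
  unfold Cnorm2 in *. cbn [Re Im] in *. unfold ipr, Cadd, Cdiv, Cmul, Cconj, Cinv, Cnorm2. cbn [Re Im].
  field. auto.
Qed.
Lemma weak_k (A B0 Cc W : Defs.C) : Cnorm2 W <> 0 ->
  Re (Cadd (Cmul (RtoC (-1)) (Cdiv A W)) (Cmul (Cconj (Cdiv B0 W)) (Cdiv Cc W))) = (- ipr A W + ipr B0 Cc) / Cnorm2 W.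
Proof.
  intros h. destruct A as [a1 a2], B0 as [b1 b2], Cc as [c1 c2], W as [w1 w2].
  unfold Cnorm2 in *. cbn [Re Im] in *. unfold ipr, Cadd, Cdiv, Cmul, Cconj, Cinv, Cnorm2, RtoC. cbn [Re Im].
  field. auto.
Qed.
Lemma weak_21 (A W : Defs.C) : Cnorm2 W <> 0 -> Re (Cdiv A W) = ipr A W / Cnorm2 W.
Proof.
  intros h. destruct A as [a1 a2], W as [w1 w2].
  unfold Cnorm2 in *. cbn [Re Im] in *. unfold ipr, Cdiv, Cmul, Cinv, Cnorm2. cbn [Re Im].
  field. auto.
Qed.

Section Main.
Variables (n : nat) (A1 A2 T1i T21 Tf2 : Mat) (pi pf : Vec) (u1 u2 : nat -> Vec) (a1 a2 : nat -> R) (sigma : R).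
Hypothesis hs : 0 < sigma.
Hypothesis S1 : spectral_decomp n A1 u1 a1.
Hypothesis S2 : spectral_decomp n A2 u2 a2.

Local Notation c := (cc n T1i T21 Tf2 u1 u2 pi pf).
Definition DD k k' j j' := Re (c j k) * Re (c j' k') + Im (c j k) * Im (c j' k').
Definition ID k k' j j' := Im (c j k) * Re (c j' k') - Re (c j k) * Im (c j' k').

Lemma PX_eq g x1 x2 : Cnorm2 (postsel n pf (PsiX n T1i T21 Tf2 u1 u2 a1 a2 sigma g pi) x1 x2) =
  rs4 n (fun k k' j j' => DD k k' j j' * ((phi sigma (x1 - g * a1 j) * phi sigma (x1 - g * a1 j')) *
                                          (phi sigma (x2 - g * a2 k) * phi sigma (x2 - g * a2 k')))).
Proof.
  rewrite PhiX_eq, Cnorm2_double. apply rs4_ext; intros. unfold DD, Cmul, RtoC. cbn [Re Im]. ring.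
Qed.

Definition Nx g := rs4 n (fun k k' j j' => DD k k' j j' *
   ((Cx sigma * Cx sigma * Ex sigma (g * a1 j - g * a1 j') * Zx sigma) *
    (Cx sigma * Cx sigma * Ex sigma (g * a2 k - g * a2 k') * Zx sigma))).
Definition Mx g := rs4 n (fun k k' j j' => DD k k' j j' *
   ((Cx sigma * Cx sigma * Ex sigma (g * a1 j - g * a1 j') * ((g * a1 j + g * a1 j') / 2 * Zx sigma)) *
    (Cx sigma * Cx sigma * Ex sigma (g * a2 k - g * a2 k') * ((g * a2 k + g * a2 k') / 2 * Zx sigma)))).

Lemma PX_int g : iR2c (fun x1 x2 => Cnorm2 (postsel n pf (PsiX n T1i T21 Tf2 u1 u2 a1 a2 sigma g pi) x1 x2)) (Nx g).
Proof.
  eapply iR2c_ext. intros; symmetry; apply PX_eq.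
  apply (iR2c_rs4 n (fun k k' j j' x1 x2 => DD k k' j j' * ((phi sigma (x1 - g * a1 j) * phi sigma (x1 - g * a1 j')) *
                                          (phi sigma (x2 - g * a2 k) * phi sigma (x2 - g * a2 k'))))).
  intros. apply iR2c_scal. apply iR2c_prod; apply iRc_X0; auto.
Qed.

Lemma PX1_int g : iR2c (fun x1 x2 => x1 * x2 * Cnorm2 (postsel n pf (PsiX n T1i T21 Tf2 u1 u2 a1 a2 sigma g pi) x1 x2)) (Mx g).
Proof.
  apply (iR2c_ext (fun x1 x2 => rs4 n (fun k k' j j' => DD k k' j j' * ((x1 * (phi sigma (x1 - g * a1 j) * phi sigma (x1 - g * a1 j'))) *
                                          (x2 * (phi sigma (x2 - g * a2 k) * phi sigma (x2 - g * a2 k'))))))).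
  { intros x1 x2. rewrite PX_eq, <- rs4_scal. apply rs4_ext. intros. ring. }
  apply (iR2c_rs4 n (fun k k' j j' x1 x2 => DD k k' j j' * ((x1 * (phi sigma (x1 - g * a1 j) * phi sigma (x1 - g * a1 j'))) *
                                          (x2 * (phi sigma (x2 - g * a2 k) * phi sigma (x2 - g * a2 k')))))).
  intros. apply iR2c_scal. apply iR2c_prod; apply iRc_X1; auto.
Qed.

Definition PKF g k1 k2 k k' j j' :=
  DD k k' j j' * ((wk sigma k1 * cos (g * (a1 j - a1 j') * k1)) * (wk sigma k2 * cos (g * (a2 k - a2 k') * k2))) +
  (- DD k k' j j') * ((wk sigma k1 * sin (g * (a1 j - a1 j') * k1)) * (wk sigma k2 * sin (g * (a2 k - a2 k') * k2))) +
  ID k k' j j' * ((wk sigma k1 * sin (g * (a1 j - a1 j') * k1)) * (wk sigma k2 * cos (g * (a2 k - a2 k') * k2))) +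
  ID k k' j j' * ((wk sigma k1 * cos (g * (a1 j - a1 j') * k1)) * (wk sigma k2 * sin (g * (a2 k - a2 k') * k2))).

Lemma PK_eq g k1 k2 : Cnorm2 (postsel n pf (PsiK n T1i T21 Tf2 u1 u2 a1 a2 sigma g pi) k1 k2) =
  rs4 n (PKF g k1 k2).
Proof.
  rewrite PhiK_eq, Cnorm2_double. apply rs4_ext; intros k k' j j' _ _ _ _. unfold PKF, DD, ID, wk.
  replace (g * (a1 j - a1 j') * k1) with (- g * a1 j' * k1 - - g * a1 j * k1) by ring.
  replace (g * (a2 k - a2 k') * k2) with (- g * a2 k' * k2 - - g * a2 k * k2) by ring.
  rewrite !cos_minus, !sin_minus.
  unfold Cmul, RtoC, Cexpi. cbn [Re Im]. ring.
Qed.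

Lemma iR2c_val F I J : iR2c F I -> I = J -> iR2c F J.
Proof. intros H ->; auto. Qed.

Definition Nk g := rs4 n (fun k k' j j' => DD k k' j j' * (J0 sigma (g * (a1 j - a1 j')) * J0 sigma (g * (a2 k - a2 k')))).
Definition Mk g := rs4 n (fun k k' j j' => - DD k k' j j' * (J1 sigma (g * (a1 j - a1 j')) * J1 sigma (g * (a2 k - a2 k')))).

Lemma PK_int g : iR2c (fun k1 k2 => Cnorm2 (postsel n pf (PsiK n T1i T21 Tf2 u1 u2 a1 a2 sigma g pi) k1 k2)) (Nk g).
Proof.
  apply (iR2c_ext (fun k1 k2 => rs4 n (PKF g k1 k2))). { intros; symmetry; apply PK_eq. }
  eapply iR2c_val.
  - apply (iR2c_rs4 n (fun k k' j j' k1 k2 => PKF g k1 k2 k k' j j')).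
    intros k k' j j' _ _ _ _. unfold PKF.
    apply iR2c_plus; [apply iR2c_plus; [apply iR2c_plus|]|]; apply iR2c_scal; apply iR2c_prod.
    + apply (J0_iRc sigma hs). + apply (J0_iRc sigma hs).
    + apply (S_zero sigma hs). + apply (S_zero sigma hs).
    + apply (S_zero sigma hs). + apply (J0_iRc sigma hs).
    + apply (J0_iRc sigma hs). + apply (S_zero sigma hs).
  - unfold Nk. apply rs4_ext; intros. ring.
Qed.

Lemma PK1_int g : iR2c (fun k1 k2 => k1 * k2 * Cnorm2 (postsel n pf (PsiK n T1i T21 Tf2 u1 u2 a1 a2 sigma g pi) k1 k2)) (Mk g).
Proof.
  apply (iR2c_ext (fun k1 k2 => rs4 n (fun k k' j j' =>
    DD k k' j j' * ((k1 * wk sigma k1 * cos (g * (a1 j - a1 j') * k1)) * (k2 * wk sigma k2 * cos (g * (a2 k - a2 k') * k2))) +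
    (- DD k k' j j') * ((k1 * wk sigma k1 * sin (g * (a1 j - a1 j') * k1)) * (k2 * wk sigma k2 * sin (g * (a2 k - a2 k') * k2))) +
    ID k k' j j' * ((k1 * wk sigma k1 * sin (g * (a1 j - a1 j') * k1)) * (k2 * wk sigma k2 * cos (g * (a2 k - a2 k') * k2))) +
    ID k k' j j' * ((k1 * wk sigma k1 * cos (g * (a1 j - a1 j') * k1)) * (k2 * wk sigma k2 * sin (g * (a2 k - a2 k') * k2)))))).
  { intros k1 k2. rewrite PK_eq, <- rs4_scal. apply rs4_ext. intros. unfold PKF. ring. }
  eapply iR2c_val.
  - apply (iR2c_rs4 n (fun k k' j j' k1 k2 =>
    DD k k' j j' * ((k1 * wk sigma k1 * cos (g * (a1 j - a1 j') * k1)) * (k2 * wk sigma k2 * cos (g * (a2 k - a2 k') * k2))) +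
    (- DD k k' j j') * ((k1 * wk sigma k1 * sin (g * (a1 j - a1 j') * k1)) * (k2 * wk sigma k2 * sin (g * (a2 k - a2 k') * k2))) +
    ID k k' j j' * ((k1 * wk sigma k1 * sin (g * (a1 j - a1 j') * k1)) * (k2 * wk sigma k2 * cos (g * (a2 k - a2 k') * k2))) +
    ID k k' j j' * ((k1 * wk sigma k1 * cos (g * (a1 j - a1 j') * k1)) * (k2 * wk sigma k2 * sin (g * (a2 k - a2 k') * k2))))).
    intros k k' j j' _ _ _ _.
    apply iR2c_plus; [apply iR2c_plus; [apply iR2c_plus|]|]; apply iR2c_scal; apply iR2c_prod.
    + apply (C1_zero sigma hs). + apply (C1_zero sigma hs).
    + apply (J1_iRc sigma hs). + apply (J1_iRc sigma hs).
    + apply (J1_iRc sigma hs). + apply (C1_zero sigma hs).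
    + apply (C1_zero sigma hs). + apply (J1_iRc sigma hs).
  - unfold Mk. apply rs4_ext; intros. ring.
Qed.

Definition W0 := amp0 n T1i T21 Tf2 pi pf.
Definition W1 := inner n pf (mv n Tf2 (mv n T21 (mv n A1 (mv n T1i pi)))).
Definition W2 := inner n pf (mv n Tf2 (mv n A2 (mv n T21 (mv n T1i pi)))).
Definition W21 := inner n pf (mv n Tf2 (mv n A2 (mv n T21 (mv n A1 (mv n T1i pi))))).

Lemma Nv_eq : Cnorm2 W0 = rs4 n DD.
Proof. unfold W0. rewrite (amp0_eq n A1 A2 T1i T21 Tf2 pi pf u1 u2 a1 a2 S1 S2), Cnorm2_double. reflexivity. Qed.

Lemma S_eq : rs4 n (fun k k' j j' => DD k k' j j' * ((a1 j + a1 j') * (a2 k + a2 k'))) = 2 * ipr W21 W0 + 2 * ipr W1 W2.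
Proof.
  transitivity (
    rs4 n (fun k k' j j' => Re (Cmul (RtoC (a2 k * a1 j)) (c j k)) * Re (c j' k') + Im (Cmul (RtoC (a2 k * a1 j)) (c j k)) * Im (c j' k')) +
    rs4 n (fun k k' j j' => Re (Cmul (RtoC (a1 j)) (c j k)) * Re (Cmul (RtoC (a2 k')) (c j' k')) + Im (Cmul (RtoC (a1 j)) (c j k)) * Im (Cmul (RtoC (a2 k')) (c j' k'))) +
    rs4 n (fun k k' j j' => Re (Cmul (RtoC (a2 k)) (c j k)) * Re (Cmul (RtoC (a1 j')) (c j' k')) + Im (Cmul (RtoC (a2 k)) (c j k)) * Im (Cmul (RtoC (a1 j')) (c j' k'))) +
    rs4 n (fun k k' j j' => Re (c j k) * Re (Cmul (RtoC (a2 k' * a1 j')) (c j' k')) + Im (c j k) * Im (Cmul (RtoC (a2 k' * a1 j')) (c j' k')))).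
  { rewrite <- !rs4_add. apply rs4_ext; intros. unfold DD, Cmul, RtoC. cbn [Re Im]. ring. }
  rewrite !ip_double. cbv beta.
  unfold W0, W1, W2, W21.
  rewrite (amp0_eq n A1 A2 T1i T21 Tf2 pi pf u1 u2 a1 a2 S1 S2).
  rewrite (amp1_eq n A1 A2 T1i T21 Tf2 pi pf u1 u2 a1 a2 S1 S2).
  rewrite (amp2_eq n A1 A2 T1i T21 Tf2 pi pf u1 u2 a1 a2 S1 S2).
  rewrite (amp21_eq n A1 A2 T1i T21 Tf2 pi pf u1 u2 a1 a2 S1 S2).
  unfold ipr. ring.
Qed.

Lemma T_eq : rs4 n (fun k k' j j' => DD k k' j j' * ((a1 j - a1 j') * (a2 k - a2 k'))) = 2 * ipr W21 W0 - 2 * ipr W1 W2.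
Proof.
  transitivity (
    rs4 n (fun k k' j j' => Re (Cmul (RtoC (a2 k * a1 j)) (c j k)) * Re (c j' k') + Im (Cmul (RtoC (a2 k * a1 j)) (c j k)) * Im (c j' k')) +
    (-1) * rs4 n (fun k k' j j' => Re (Cmul (RtoC (a1 j)) (c j k)) * Re (Cmul (RtoC (a2 k')) (c j' k')) + Im (Cmul (RtoC (a1 j)) (c j k)) * Im (Cmul (RtoC (a2 k')) (c j' k'))) +
    (-1) * rs4 n (fun k k' j j' => Re (Cmul (RtoC (a2 k)) (c j k)) * Re (Cmul (RtoC (a1 j')) (c j' k')) + Im (Cmul (RtoC (a2 k)) (c j k)) * Im (Cmul (RtoC (a1 j')) (c j' k'))) +
    rs4 n (fun k k' j j' => Re (c j k) * Re (Cmul (RtoC (a2 k' * a1 j')) (c j' k')) + Im (c j k) * Im (Cmul (RtoC (a2 k' * a1 j')) (c j' k')))).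
  { rewrite <- !rs4_scal, <- !rs4_add. apply rs4_ext; intros. unfold DD, Cmul, RtoC. cbn [Re Im]. ring. }
  rewrite !ip_double. cbv beta.
  unfold W0, W1, W2, W21.
  rewrite (amp0_eq n A1 A2 T1i T21 Tf2 pi pf u1 u2 a1 a2 S1 S2).
  rewrite (amp1_eq n A1 A2 T1i T21 Tf2 pi pf u1 u2 a1 a2 S1 S2).
  rewrite (amp2_eq n A1 A2 T1i T21 Tf2 pi pf u1 u2 a1 a2 S1 S2).
  rewrite (amp21_eq n A1 A2 T1i T21 Tf2 pi pf u1 u2 a1 a2 S1 S2).
  unfold ipr. ring.
Qed.

Lemma ExEx x y : Rabs (Ex sigma x * Ex sigma y - 1) <= (x * x + y * y) / (8 * sigma ^ 2).
Proof.
  unfold Ex. rewrite <- exp_plus.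
  replace (- (x * x) / (8 * sigma ^ 2) + - (y * y) / (8 * sigma ^ 2)) with (- ((x * x + y * y) / (8 * sigma ^ 2))) by (field; lra).
  apply exp_near1. apply Rdiv_le_0_compat. nra. nra.
Qed.

Definition K0x := Cx sigma * Cx sigma * Zx sigma * (Cx sigma * Cx sigma * Zx sigma).
Definition qx k k' j j' := ((a1 j - a1 j') * (a1 j - a1 j') + (a2 k - a2 k') * (a2 k - a2 k')) / (8 * sigma ^ 2).

Lemma K0x_pos : 0 < K0x.
Proof.
  unfold K0x. assert (0 < Cx sigma) by (unfold Cx, Rpower; apply exp_pos).
  pose proof (Zx_pos sigma hs). assert (0 < Cx sigma * Cx sigma * Zx sigma) by (repeat apply Rmult_lt_0_compat; auto).
  nra.
Qed.

Lemma term_bound X E u g : 0 <= X -> Rabs (E - 1) <= g ^ 2 * u -> Rabs (X * (E - 1)) <= g ^ 2 * (X * u).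
Proof. intros hX h. rewrite Rabs_mult, (Rabs_right X) by lra. replace (g ^ 2 * (X * u)) with (X * (g ^ 2 * u)) by ring.
  apply Rmult_le_compat_l; auto. Qed.

Lemma ExEx_g g k k' j j' : Rabs (Ex sigma (g * a1 j - g * a1 j') * Ex sigma (g * a2 k - g * a2 k') - 1) <= g ^ 2 * qx k k' j j'.
Proof.
  eapply Rle_trans. apply ExEx. right. unfold qx. field. lra.
Qed.

Lemma Nx_approx g : Rabs (Nx g - K0x * Cnorm2 W0) <= g ^ 2 * rs4 n (fun k k' j j' => K0x * Rabs (DD k k' j j') * qx k k' j j').
Proof.
  rewrite Nv_eq, <- rs4_scal. unfold Nx. apply rs4_approx. intros k k' j j' _ _ _ _.
  replace (DD k k' j j' * (Cx sigma * Cx sigma * Ex sigma (g * a1 j - g * a1 j') * Zx sigma *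
     (Cx sigma * Cx sigma * Ex sigma (g * a2 k - g * a2 k') * Zx sigma)) - K0x * DD k k' j j')
    with (DD k k' j j' * K0x * (Ex sigma (g * a1 j - g * a1 j') * Ex sigma (g * a2 k - g * a2 k') - 1)) by (unfold K0x; ring).
  rewrite Rabs_mult. rewrite Rabs_mult, (Rabs_right K0x) by (left; apply K0x_pos).
  pose proof (ExEx_g g k k' j j'). pose proof (Rabs_pos (DD k k' j j')). pose proof K0x_pos.
  replace (g ^ 2 * (K0x * Rabs (DD k k' j j') * qx k k' j j')) with (Rabs (DD k k' j j') * K0x * (g ^ 2 * qx k k' j j')) by ring.
  apply Rmult_le_compat_l; auto. nra.
Qed.

Definition Sx := rs4 n (fun k k' j j' => DD k k' j j' * ((a1 j + a1 j') * (a2 k + a2 k'))).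

Lemma Mx_approx g : Rabs (Mx g - g ^ 2 * (K0x / 4 * Sx)) <=
   g ^ 4 * rs4 n (fun k k' j j' => K0x / 4 * Rabs (DD k k' j j' * ((a1 j + a1 j') * (a2 k + a2 k'))) * qx k k' j j').
Proof.
  unfold Sx. rewrite <- (rs4_scal n (K0x / 4)), <- (rs4_scal n (g ^ 2)). unfold Mx. apply rs4_approx. intros k k' j j' _ _ _ _.
  set (P := DD k k' j j' * ((a1 j + a1 j') * (a2 k + a2 k'))).
  replace (DD k k' j j' *
   (Cx sigma * Cx sigma * Ex sigma (g * a1 j - g * a1 j') * ((g * a1 j + g * a1 j') / 2 * Zx sigma) *
    (Cx sigma * Cx sigma * Ex sigma (g * a2 k - g * a2 k') * ((g * a2 k + g * a2 k') / 2 * Zx sigma))) -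
   g ^ 2 * (K0x / 4 * P))
    with (g ^ 2 * (K0x / 4 * P) * (Ex sigma (g * a1 j - g * a1 j') * Ex sigma (g * a2 k - g * a2 k') - 1))
    by (unfold P, K0x; field).
  rewrite Rabs_mult. rewrite Rabs_mult, (Rabs_right (g ^ 2)) by (apply Rle_ge; apply pow2_ge_0).
  rewrite Rabs_mult, (Rabs_right (K0x / 4)) by (left; pose proof K0x_pos; lra).
  pose proof (ExEx_g g k k' j j'). pose proof (Rabs_pos P). pose proof K0x_pos. pose proof (pow2_ge_0 g).
  replace (g ^ 4 * (K0x / 4 * Rabs P * qx k k' j j')) with (g ^ 2 * (K0x / 4 * Rabs P) * (g ^ 2 * qx k k' j j')) by ring.
  apply Rmult_le_compat_l; auto. apply Rmult_le_pos; auto. apply Rmult_le_pos; auto. lra.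
Qed.

Lemma prod0 x y Z ex ey : Rabs (x - Z) <= ex -> Rabs (y - Z) <= ey -> Rabs y <= Z -> 0 <= Z ->
  Rabs (x * y - Z * Z) <= ex * Z + Z * ey.
Proof.
  intros h1 h2 h3 h4.
  replace (x * y - Z * Z) with ((x - Z) * y + Z * (y - Z)) by ring.
  eapply Rle_trans. apply Rabs_triang. rewrite !Rabs_mult, (Rabs_right Z) by lra.
  pose proof (Rabs_pos (x - Z)). pose proof (Rabs_pos y).
  apply Rplus_le_compat. apply Rmult_le_compat; auto. apply Rmult_le_compat_l; auto.
Qed.

Lemma prod1 x y a b e f g : 0 <= g <= 1 -> 0 <= e -> 0 <= f ->
  Rabs (x - g * a) <= g ^ 3 * e -> Rabs (y - g * b) <= g ^ 3 * f ->
  Rabs (x * y - g ^ 2 * (a * b)) <= g ^ 4 * (Rabs a * f + e * Rabs b + e * f).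
Proof.
  intros hg he hf h1 h2.
  set (e1 := x - g * a) in *. set (e2 := y - g * b) in *.
  replace (x * y - g ^ 2 * (a * b)) with (g * a * e2 + g * b * e1 + e1 * e2) by (unfold e1, e2; ring).
  assert (g ^ 6 <= g ^ 4).
  { replace (g ^ 6) with (g ^ 4 * (g * g)) by ring. assert (0 <= g ^ 4) by (apply pow_le; lra).
    assert (g * g <= 1) by nra. nra. }
  pose proof (Rabs_pos e1). pose proof (Rabs_pos e2). pose proof (Rabs_pos a). pose proof (Rabs_pos b).
  assert (0 <= g ^ 3) by (apply pow_le; lra).
  eapply Rle_trans. apply Rabs_triang. eapply Rle_trans. apply Rplus_le_compat_r. apply Rabs_triang.
  rewrite !Rabs_mult, (Rabs_right g) by lra.
  assert (B1 : g * Rabs a * Rabs e2 <= g ^ 4 * (Rabs a * f)).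
  { replace (g ^ 4 * (Rabs a * f)) with (g * Rabs a * (g ^ 3 * f)) by ring. apply Rmult_le_compat_l; auto. nra. }
  assert (B2 : g * Rabs b * Rabs e1 <= g ^ 4 * (e * Rabs b)).
  { replace (g ^ 4 * (e * Rabs b)) with (g * Rabs b * (g ^ 3 * e)) by ring. apply Rmult_le_compat_l; auto. nra. }
  assert (B3 : Rabs e1 * Rabs e2 <= g ^ 4 * (e * f)).
  { apply Rle_trans with ((g ^ 3 * e) * (g ^ 3 * f)). apply Rmult_le_compat; auto.
    replace (g ^ 3 * e * (g ^ 3 * f)) with (g ^ 6 * (e * f)) by ring. apply Rmult_le_compat_r; nra. }
  lra.
Qed.

Definition Lk k k' j j' :=
  Rabs ((a1 j - a1 j') * Z2 sigma) * (Rabs (a2 k - a2 k') * Rabs (a2 k - a2 k') * Rabs (a2 k - a2 k') / 6 * Z4 sigma) +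
  (Rabs (a1 j - a1 j') * Rabs (a1 j - a1 j') * Rabs (a1 j - a1 j') / 6 * Z4 sigma) * Rabs ((a2 k - a2 k') * Z2 sigma) +
  (Rabs (a1 j - a1 j') * Rabs (a1 j - a1 j') * Rabs (a1 j - a1 j') / 6 * Z4 sigma) *
  (Rabs (a2 k - a2 k') * Rabs (a2 k - a2 k') * Rabs (a2 k - a2 k') / 6 * Z4 sigma).

Lemma J1_g g al : 0 < g -> Rabs (J1 sigma (g * al) - g * (al * Z2 sigma)) <= g ^ 3 * (Rabs al * Rabs al * Rabs al / 6 * Z4 sigma).
Proof.
  intros hg. pose proof (J1_approx sigma hs (g * al)). rewrite Rabs_mult, (Rabs_right g) in H by lra.
  replace (g * (al * Z2 sigma)) with (g * al * Z2 sigma) by ring.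
  eapply Rle_trans. apply H. right. unfold Rdiv. ring.
Qed.

Definition Tx := rs4 n (fun k k' j j' => DD k k' j j' * ((a1 j - a1 j') * (a2 k - a2 k'))).

Lemma Mk_approx g : 0 < g <= 1 -> Rabs (Mk g - g ^ 2 * (- (Z2 sigma * Z2 sigma) * Tx)) <=
   g ^ 4 * rs4 n (fun k k' j j' => Rabs (DD k k' j j') * Lk k k' j j').
Proof.
  intros hg. unfold Tx. rewrite <- (rs4_scal n (- (Z2 sigma * Z2 sigma))), <- (rs4_scal n (g ^ 2)).
  unfold Mk. apply rs4_approx. intros k k' j j' _ _ _ _.
  replace (- DD k k' j j' * (J1 sigma (g * (a1 j - a1 j')) * J1 sigma (g * (a2 k - a2 k'))) -
     g ^ 2 * (- (Z2 sigma * Z2 sigma) * (DD k k' j j' * ((a1 j - a1 j') * (a2 k - a2 k')))))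
    with (- DD k k' j j' * (J1 sigma (g * (a1 j - a1 j')) * J1 sigma (g * (a2 k - a2 k')) -
          g ^ 2 * (((a1 j - a1 j') * Z2 sigma) * ((a2 k - a2 k') * Z2 sigma)))) by ring.
  rewrite Rabs_mult, Rabs_Ropp.
  replace (g ^ 4 * (Rabs (DD k k' j j') * Lk k k' j j')) with (Rabs (DD k k' j j') * (g ^ 4 * Lk k k' j j')) by ring.
  apply Rmult_le_compat_l. apply Rabs_pos. unfold Lk.
  pose proof (Z4_nonneg sigma hs).
  apply prod1. lra.
  apply Rmult_le_pos; auto. unfold Rdiv. repeat apply Rmult_le_pos; try apply Rabs_pos; lra.
  apply Rmult_le_pos; auto. unfold Rdiv. repeat apply Rmult_le_pos; try apply Rabs_pos; lra.
  apply J1_g; lra. apply J1_g; lra.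
Qed.

Lemma Nk_approx g : Rabs (Nk g - Zw sigma * Zw sigma * Cnorm2 W0) <=
   g ^ 2 * rs4 n (fun k k' j j' => Rabs (DD k k' j j') *
      (Zw sigma * Z2 sigma / 2 * ((a1 j - a1 j') * (a1 j - a1 j') + (a2 k - a2 k') * (a2 k - a2 k')))).
Proof.
  rewrite Nv_eq, <- rs4_scal. unfold Nk. apply rs4_approx. intros k k' j j' _ _ _ _.
  replace (DD k k' j j' * (J0 sigma (g * (a1 j - a1 j')) * J0 sigma (g * (a2 k - a2 k'))) - Zw sigma * Zw sigma * DD k k' j j')
    with (DD k k' j j' * (J0 sigma (g * (a1 j - a1 j')) * J0 sigma (g * (a2 k - a2 k')) - Zw sigma * Zw sigma)) by ring.
  rewrite Rabs_mult.
  replace (g ^ 2 * (Rabs (DD k k' j j') * (Zw sigma * Z2 sigma / 2 * ((a1 j - a1 j') * (a1 j - a1 j') + (a2 k - a2 k') * (a2 k - a2 k')))))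
    with (Rabs (DD k k' j j') * ((g * (a1 j - a1 j')) * (g * (a1 j - a1 j')) / 2 * Z2 sigma * Zw sigma +
                                 Zw sigma * ((g * (a2 k - a2 k')) * (g * (a2 k - a2 k')) / 2 * Z2 sigma))) by (unfold Rdiv; ring).
  apply Rmult_le_compat_l. apply Rabs_pos.
  apply prod0. apply J0_approx; auto. apply J0_approx; auto. apply J0_le; auto.
  left; apply Zw_pos; auto.
Qed.

Lemma rs4_nonneg' F : (forall k k' j j', 0 <= F k k' j j') -> 0 <= rs4 n F.
Proof.
  intros H. unfold rs4.
  assert (G : forall m (f : nat -> R), (forall t, 0 <= f t) -> 0 <= rsum m f).
  { induction m; intros f Hf; simpl. lra. pose proof (IHm f Hf). pose proof (Hf m). lra. }
  apply G; intros. apply G; intros. apply G; intros. apply G; intros. auto.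
Qed.

Lemma Nv_pos : amp0 n T1i T21 Tf2 pi pf <> C0 -> 0 < Cnorm2 W0.
Proof.
  intros h. unfold W0. destruct (amp0 n T1i T21 Tf2 pi pf) as [x y]. unfold Cnorm2. cbn [Re Im].
  destruct (Req_dec x 0); destruct (Req_dec y 0).
  - subst. exfalso. apply h. reflexivity.
  - assert (0 < y * y) by (apply Rsqr_pos_lt; auto). nra.
  - assert (0 < x * x) by (apply Rsqr_pos_lt; auto). nra.
  - assert (0 < x * x) by (apply Rsqr_pos_lt; auto). nra.
Qed.

Lemma main_sec : amp0 n T1i T21 Tf2 pi pf <> C0 ->
  let w1 := weak1 n A1 T1i T21 Tf2 pi pf in
  let w2 := weak2 n A2 T1i T21 Tf2 pi pf in
  let w21 := weak21 n A1 A2 T1i T21 Tf2 pi pf in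
  exists K delta, 0 < delta /\
    forall g, 0 < g < delta ->
      exists mx mk,
        mean2 (fun x1 x2 => Cnorm2 (postsel n pf
                  (PsiX n T1i T21 Tf2 u1 u2 a1 a2 sigma g pi) x1 x2))
              (fun x1 x2 => x1 * x2) mx /\
        mean2 (fun k1 k2 => Cnorm2 (postsel n pf
                  (PsiK n T1i T21 Tf2 u1 u2 a1 a2 sigma g pi) k1 k2))
              (fun k1 k2 => k1 * k2) mk /\
        Rabs (mx - g ^ 2 / 2 * Re (Cadd w21 (Cmul (Cconj w1) w2))) <= K * g ^ 3 /\
        Rabs (mk - g ^ 2 / (8 * sigma ^ 4) *
                Re (Cadd (Cmul (RtoC (-1)) w21) (Cmul (Cconj w1) w2))) <= K * g ^ 3 /\
        Rabs (Re w21 - / g ^ 2 * (mx - 4 * sigma ^ 4 * mk)) <= K * g.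
Proof.
  intros hamp w1 w2 w21.
  pose proof (Nv_pos hamp) as hNv. set (Nv := Cnorm2 W0) in *.
  pose proof K0x_pos as hK0. pose proof (Zw_pos sigma hs) as hZw.
  pose proof (Z2_nonneg sigma hs) as hZ2. pose proof (Z4_nonneg sigma hs) as hZ4.
  set (Bx1 := rs4 n (fun k k' j j' => K0x * Rabs (DD k k' j j') * qx k k' j j')).
  set (Bx2 := rs4 n (fun k k' j j' => K0x / 4 * Rabs (DD k k' j j' * ((a1 j + a1 j') * (a2 k + a2 k'))) * qx k k' j j')).
  set (Bk1 := rs4 n (fun k k' j j' => Rabs (DD k k' j j') *
      (Zw sigma * Z2 sigma / 2 * ((a1 j - a1 j') * (a1 j - a1 j') + (a2 k - a2 k') * (a2 k - a2 k'))))).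
  set (Bk2 := rs4 n (fun k k' j j' => Rabs (DD k k' j j') * Lk k k' j j')).
  assert (hq : forall k k' j j', 0 <= qx k k' j j').
  { intros. unfold qx. assert (0 < sigma ^ 2) by (apply pow_lt; lra). apply Rdiv_le_0_compat. apply Rplus_le_le_0_compat; apply Rle_0_sqr. lra. }
  assert (hBx1 : 0 <= Bx1). { apply rs4_nonneg'. intros. apply Rmult_le_pos; [apply Rmult_le_pos; [lra|apply Rabs_pos]|auto]. }
  assert (hBx2 : 0 <= Bx2). { apply rs4_nonneg'. intros. pose proof (Rabs_pos (DD k k' j j' * ((a1 j + a1 j') * (a2 k + a2 k')))).
    pose proof (hq k k' j j'). assert (0 <= K0x / 4) by lra. apply Rmult_le_pos; auto. apply Rmult_le_pos; auto. }
  assert (hBk1 : 0 <= Bk1). { apply rs4_nonneg'. intros. apply Rmult_le_pos. apply Rabs_pos.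
    apply Rmult_le_pos. unfold Rdiv. repeat apply Rmult_le_pos; lra. apply Rplus_le_le_0_compat; apply Rle_0_sqr. }
  assert (hBk2 : 0 <= Bk2). { apply rs4_nonneg'. intros. apply Rmult_le_pos. apply Rabs_pos. unfold Lk.
    unfold Rdiv. repeat (apply Rplus_le_le_0_compat || apply Rmult_le_pos); first [apply Rabs_pos | lra | (left; apply Rinv_0_lt_compat; lra)]. }
  set (Bx := Bx1 + Bx2). set (Bk := Bk1 + Bk2).
  set (Nvx := K0x * Nv). set (Mvx := K0x / 4 * Sx).
  set (Nvk := Zw sigma * Zw sigma * Nv). set (Mvk := - (Z2 sigma * Z2 sigma) * Tx).
  assert (hNvx : 0 < Nvx) by (unfold Nvx; nra).
  assert (hNvk : 0 < Nvk) by (unfold Nvk; assert (0 < Zw sigma * Zw sigma) by nra; nra).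
  set (Kx := Krat Nvx Bx Mvx). set (Kk := Krat Nvk Bk Mvk).
  assert (hKx : 0 <= Kx) by (unfold Kx, Krat; apply Rdiv_le_0_compat; [pose proof (Rabs_pos Mvx); unfold Bx; nra | nra]).
  assert (hKk : 0 <= Kk) by (unfold Kk, Krat; apply Rdiv_le_0_compat; [pose proof (Rabs_pos Mvk); unfold Bk; nra | nra]).
  assert (hs4 : 0 < sigma ^ 4) by (apply pow_lt; lra).
  exists ((Kx + Kk) * (1 + 4 * sigma ^ 4)), (Rmin (dlt Nvx Bx) (dlt Nvk Bk)).
  split.
  { apply Rmin_glb_lt; unfold dlt; apply Rmin_glb_lt; try lra; apply Rdiv_lt_0_compat; unfold Bx, Bk; lra. }
  intros g [hg hgd].
  assert (hg1 : g <= 1).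
  { left. eapply Rlt_le_trans. apply hgd. eapply Rle_trans. apply Rmin_l. apply Rmin_l. }
  assert (RX : Nx g <> 0 /\ Rabs (Mx g / Nx g - g ^ 2 * Mvx / Nvx) <= Kx * g ^ 3 /\ 0 <= Kx).
  { apply ratio; auto. unfold Bx; lra. eapply Rlt_le_trans. apply hgd. apply Rmin_l.
    - eapply Rle_trans. apply Nx_approx. fold Bx1. pose proof (pow2_ge_0 g). unfold Bx. nra.
    - eapply Rle_trans. apply Mx_approx. fold Bx2. assert (0 <= g ^ 4) by (apply pow_le; lra). unfold Bx. nra. }
  assert (RK : Nk g <> 0 /\ Rabs (Mk g / Nk g - g ^ 2 * Mvk / Nvk) <= Kk * g ^ 3 /\ 0 <= Kk).
  { apply ratio; auto. unfold Bk; lra. eapply Rlt_le_trans. apply hgd. apply Rmin_r.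
    - eapply Rle_trans. apply Nk_approx. fold Bk1. pose proof (pow2_ge_0 g). unfold Bk. nra.
    - eapply Rle_trans. apply Mk_approx. lra. fold Bk2. assert (0 <= g ^ 4) by (apply pow_le; lra). unfold Bk. nra. }
  destruct RX as [hNx [hX _]]. destruct RK as [hNk [hK _]].
  assert (EX : g ^ 2 * Mvx / Nvx = g ^ 2 / 2 * Re (Cadd w21 (Cmul (Cconj w1) w2))).
  { unfold w1, w2, w21, weak1, weak2, weak21. fold W0. fold W1 W2 W21.
    rewrite weak_x by (apply Rgt_not_eq; exact hNv). fold Nv. unfold Mvx, Nvx, Sx. rewrite S_eq. field. lra. }
  assert (EK : g ^ 2 * Mvk / Nvk = g ^ 2 / (8 * sigma ^ 4) * Re (Cadd (Cmul (RtoC (-1)) w21) (Cmul (Cconj w1) w2))).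
  { unfold w1, w2, w21, weak1, weak2, weak21. fold W0. fold W1 W2 W21.
    rewrite weak_k by (apply Rgt_not_eq; exact hNv). fold Nv. unfold Mvk, Nvk, Tx. rewrite T_eq. rewrite (Z2_eq sigma hs).
    field. repeat split; lra. }
  assert (E21 : Re w21 = ipr W21 W0 / Nv).
  { unfold w21, weak21. fold W0 W21. rewrite weak_21 by (apply Rgt_not_eq; exact hNv). reflexivity. }
  exists (Mx g / Nx g), (Mk g / Nk g).
  split; [|split; [|split; [|split]]].
  - exists (Nx g), (Mx g). split. apply iR2c_is_int2. apply PX_int. split; auto.
    split. apply iR2c_is_int2. apply PX1_int. reflexivity.
  - exists (Nk g), (Mk g). split. apply iR2c_is_int2. apply PK_int. split; auto.
    split. apply iR2c_is_int2. apply PK1_int. reflexivity.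
  - rewrite <- EX. eapply Rle_trans. apply hX. apply Rmult_le_compat_r. apply pow_le; lra. nra.
  - rewrite <- EK. eapply Rle_trans. apply hK. apply Rmult_le_compat_r. apply pow_le; lra. nra.
  - assert (ID0 : g ^ 2 * Mvx / Nvx - 4 * sigma ^ 4 * (g ^ 2 * Mvk / Nvk) = g ^ 2 * Re w21).
    { rewrite E21. unfold Mvx, Nvx, Mvk, Nvk, Sx, Tx. rewrite S_eq, T_eq, (Z2_eq sigma hs). field. repeat split; lra. }
    set (mx := Mx g / Nx g) in *. set (mk := Mk g / Nk g) in *.
    set (ax := g ^ 2 * Mvx / Nvx) in *. set (ak := g ^ 2 * Mvk / Nvk) in *.
    assert (hg2 : 0 < g ^ 2) by (apply pow_lt; lra).
    replace (Re w21 - / g ^ 2 * (mx - 4 * sigma ^ 4 * mk)) with (- (/ g ^ 2) * ((mx - ax) - 4 * sigma ^ 4 * (mk - ak))).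
    2: { replace (Re w21) with ((ax - 4 * sigma ^ 4 * ak) / g ^ 2) by (rewrite ID0; field; lra). field. lra. }
    rewrite Rabs_mult, Rabs_Ropp, Rabs_right by (left; apply Rinv_0_lt_compat; lra).
    assert (hsum : Rabs ((mx - ax) - 4 * sigma ^ 4 * (mk - ak)) <= Kx * g ^ 3 + 4 * sigma ^ 4 * (Kk * g ^ 3)).
    { eapply Rle_trans. apply Rabs_triang. rewrite Rabs_Ropp, Rabs_mult, (Rabs_right (4 * sigma ^ 4)) by lra.
      apply Rplus_le_compat; auto. apply Rmult_le_compat_l; lra. }
    apply Rle_trans with (/ g ^ 2 * (Kx * g ^ 3 + 4 * sigma ^ 4 * (Kk * g ^ 3))).
    apply Rmult_le_compat_l; auto. left; apply Rinv_0_lt_compat; lra.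
    replace (/ g ^ 2 * (Kx * g ^ 3 + 4 * sigma ^ 4 * (Kk * g ^ 3))) with ((Kx + 4 * sigma ^ 4 * Kk) * g) by (field; lra).
    apply Rmult_le_compat_r. lra. nra.
Qed.
End Main.


Theorem mainTheorem7 (n : nat) (A1 A2 T1i T21 Tf2 : Mat) (psi_i psi_f : Vec)
  (u1 u2 : nat -> Vec) (a1 a2 : nat -> R) (sigma : R) :
  0 < sigma ->
  self_adjoint n A1 -> self_adjoint n A2 ->
  spectral_decomp n A1 u1 a1 -> spectral_decomp n A2 u2 a2 ->
  unitary n T1i -> unitary n T21 -> unitary n Tf2 ->
  unit_vec n psi_i -> unit_vec n psi_f ->
  amp0 n T1i T21 Tf2 psi_i psi_f <> C0 ->
  let w1 := weak1 n A1 T1i T21 Tf2 psi_i psi_f in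
  let w2 := weak2 n A2 T1i T21 Tf2 psi_i psi_f in
  let w21 := weak21 n A1 A2 T1i T21 Tf2 psi_i psi_f in
  exists K delta, 0 < delta /\
    forall g, 0 < g < delta ->
      exists mx mk,
        mean2 (fun x1 x2 => Cnorm2 (postsel n psi_f
                  (PsiX n T1i T21 Tf2 u1 u2 a1 a2 sigma g psi_i) x1 x2))
              (fun x1 x2 => x1 * x2) mx /\
        mean2 (fun k1 k2 => Cnorm2 (postsel n psi_f
                  (PsiK n T1i T21 Tf2 u1 u2 a1 a2 sigma g psi_i) k1 k2))
              (fun k1 k2 => k1 * k2) mk /\
        Rabs (mx - g ^ 2 / 2 * Re (Cadd w21 (Cmul (Cconj w1) w2))) <= K * g ^ 3 /\
        Rabs (mk - g ^ 2 / (8 * sigma ^ 4) *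
                Re (Cadd (Cmul (RtoC (-1)) w21) (Cmul (Cconj w1) w2))) <= K * g ^ 3 /\
        Rabs (Re w21 - / g ^ 2 * (mx - 4 * sigma ^ 4 * mk)) <= K * g.
Proof.
  intros hs sa1 sa2 S1 S2 U1 U2 U3 ui uf hamp.
  apply main_sec; auto.
Qed.
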